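(* Let $\varepsilon>0$, $\theta_0>0$, $N=2K+1$, $h=L/N$, and assume the mobility satisfies $\mathcal{M}(x)\ge\mathcal{M}_0>0$ for $x\in[-1,1]$. Let $\Phi\in C^6_{\rm per}(\Omega)$ with $\|\Phi\|_{L^\infty}<1$, and set $\phi^0:=\mathcal{P}_h(\mathcal{P}_N\Phi)$. Let $(\phi^m,\mu^m)_{m\ge1}$ be generated by the scheme $$\frac{\phi^{m}-\phi^{m-1}}{\Delta t}=\nabla_h\cdot(\check{\mathcal{M}}^{m-1}\nabla_h\mu^{m}),\qquad \mu^{m}=\ln(1+\phi^{m})-\ln(1-\phi^{m})-\theta_0\phi^{m-1}-\varepsilon^2\Delta_h\phi^{m}.$$ Then $(\Phi,1)_{L^2}=\langle\phi^0,1\rangle$, and, for any $\Delta t>0$, $h>0$ and $m\in\mathbb{N}$, $$E_h(\phi^m)+\Delta t\,[\check{\mathcal{M}}^{m-1}\nabla_h\mu^m,\nabla_h\mu^m]\le E_h(\phi^{m-1}),$$ so that $E_h(\phi^m)\le E_h(\phi^0)\le C_6$ with $C_6>0$ independent of $h$. Consequently $$\|\nabla_h\phi^m\|_2\le\sqrt{2C_6+\theta_0|\Omega|}\,\varepsilon^{-1}=:C_7\quad\forall m\in\mathbb{N}.$$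
   Context: $\Omega=(0,L)^3$, periodic; $p_i=(i-\tfrac12)h$. $\mathcal{C}_{\rm per}$: real $N$-periodic grid functions on cell centers; $\langle\nu,\xi\rangle=h^3\sum_{i,j,k=1}^N\nu_{i,j,k}\xi_{i,j,k}$; $\|\nu\|_2^2=\langle\nu,\nu\rangle$. $\mathcal{P}_N$ is the Fourier projection of $C_{\rm per}(\Omega)$ onto $\Omega$-periodic trigonometric polynomials of degree at most $K$ in each variable; $\mathcal{P}_h$ is evaluation at cell centers $(p_i,p_j,p_k)$. Face differences $D_x\nu_{i+1/2,j,k}=(\nu_{i+1,j,k}-\nu_{i,j,k})/h$ (similarly $D_y,D_z$), and for face vector fields $[\vec f,\vec g]=h^3\sum_{i,j,k=1}^N(f^x_{i+1/2,j,k}g^x_{i+1/2,j,k}+f^y_{i,j+1/2,k}g^y_{i,j+1/2,k}+f^z_{i,j,k+1/2}g^z_{i,j,k+1/2})$; $\nabla_h\nu=(D_x\nu,D_y\nu,D_z\nu)$ and $\|\nabla_h\nu\|_2^2=[\nabla_h\nu,\nabla_h\nu]$. $\Delta_h$ is the standard 7-point discrete Laplacian. Face mobility $\check{\mathcal{M}}^{n}_{i+1/2,j,k}=\mathcal{M}(\tfrac12(\phi^n_{i+1,j,k}+\phi^n_{i,j,k}))$ etc., and $\nabla_h\cdot(\mathcal{D}\nabla_h\nu)=d_x(\mathcal{D}D_x\nu)+d_y(\mathcal{D}D_y\nu)+d_z(\mathcal{D}D_z\nu)$ with $d_x f_{i,j,k}=(f_{i+1/2,j,k}-f_{i-1/2,j,k})/h$.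 Discrete energy: $E_h(\phi)=\langle1+\phi,\ln(1+\phi)\rangle+\langle1-\phi,\ln(1-\phi)\rangle+\frac{\varepsilon^2}{2}\|\nabla_h\phi\|_2^2-\frac{\theta_0}{2}\|\phi\|_2^2$. *)

(* Defs.v *)
From Stdlib Require Import Reals Lra Lia.
From Coquelicot Require Import Coquelicot.
Open Scope R_scope.

Definition fun3 := R -> R -> R -> R.

Definition cont3 (f : fun3) : Prop :=
  forall x y z : R,
    continuous (fun p : R * R * R => f (fst (fst p)) (snd (fst p)) (snd p)) (x, y, z).

Definition pdx (f : fun3) : fun3 := fun x y z => Derive (fun t => f t y z) x.
Definition pdy (f : fun3) : fun3 := fun x y z => Derive (fun t => f x t z) y.
Definition pdz (f : fun3) : fun3 := fun x y z => Derive (fun t => f x y t) z.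

Fixpoint Ck (k : nat) (f : fun3) : Prop :=
  cont3 f /\
  match k with
  | O => True
  | S k' =>
      (forall x y z, ex_derive (fun t => f t y z) x /\
                     ex_derive (fun t => f x t z) y /\
                     ex_derive (fun t => f x y t) z) /\
      Ck k' (pdx f) /\ Ck k' (pdy f) /\ Ck k' (pdz f)
  end.

Definition periodic3 (L : R) (f : fun3) : Prop :=
  forall x y z, f (x + L) y z = f x y z /\ f x (y + L) z = f x y z /\
                f x y (z + L) = f x y z.

Definition C6per (L : R) (f : fun3) : Prop := periodic3 L f /\ Ck 6 f.

Definition intOmega (L : R) (f : fun3) : R :=
  RInt (fun x => RInt (fun y => RInt (fun z => f x y z) 0 L) 0 L) 0 L.

Fixpoint rsum (n : nat) (f : nat -> R) : R :=
  match n with O => 0 | S n' => rsum n' f + f n' end.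

(* Fourier projection P_N onto trigonometric polynomials of degree <= K in
   each variable:  P_N f (x) = sum_{k in [-K,K]^3} hat f_k e^{2 pi i k.x/L},
   hat f_k = L^{-3} int_Omega f(y) e^{-2 pi i k.y/L} dy.  Summing over the
   symmetric index set, this is (exactly) the real expression below. *)
Definition PN (L : R) (K : nat) (f : fun3) : fun3 := fun x1 x2 x3 =>
  / (L ^ 3) *
  rsum (2 * K + 1) (fun a => rsum (2 * K + 1) (fun b => rsum (2 * K + 1) (fun c =>
    let k1 := INR a - INR K in
    let k2 := INR b - INR K in
    let k3 := INR c - INR K in
    intOmega L (fun y1 y2 y3 =>
      f y1 y2 y3 *
      cos (2 * PI * (k1 * (x1 - y1) + k2 * (x2 - y2) + k3 * (x3 - y3)) / L))))).

(* ---------- grid functions ----------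
   A grid function is nat -> nat -> nat -> R; only indices 0..N-1 matter,
   index i (0-based) is the cell center p_{i+1} = (i + 1/2) h.
   Periodicity is built into the operators via indices mod N. *)

Definition gf := nat -> nat -> nat -> R.

Definition sp (N i : nat) : nat := (S i) mod N.
Definition pp (N i : nat) : nat := (i + N - 1) mod N.

Definition sum3 (N : nat) (f : gf) : R :=
  rsum N (fun i => rsum N (fun j => rsum N (fun k => f i j k))).

Definition ip (N : nat) (h : R) (nu xi : gf) : R :=
  h ^ 3 * sum3 N (fun i j k => nu i j k * xi i j k).
Definition norm2sq (N : nat) (h : R) (nu : gf) : R := ip N h nu nu.

Definition Ph (h : R) (f : fun3) : gf := fun i j k =>
  f ((INR i + /2) * h) ((INR j + /2) * h) ((INR k + /2) * h).

(* face differences; the value stored at index i is the one at face i+1/2 *)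
Definition Dx (N : nat) (h : R) (nu : gf) : gf :=
  fun i j k => (nu (sp N i) j k - nu i j k) / h.
Definition Dy (N : nat) (h : R) (nu : gf) : gf :=
  fun i j k => (nu i (sp N j) k - nu i j k) / h.
Definition Dz (N : nat) (h : R) (nu : gf) : gf :=
  fun i j k => (nu i j (sp N k) - nu i j k) / h.

(* face vector field: (f^x, f^y, f^z), each indexed by the lower cell *)
Record facefield := FF { fx : gf; fy : gf; fz : gf }.

Definition fip (N : nat) (h : R) (f g : facefield) : R :=
  h ^ 3 * sum3 N (fun i j k =>
    fx f i j k * fx g i j k + fy f i j k * fy g i j k + fz f i j k * fz g i j k).

Definition grad (N : nat) (h : R) (nu : gf) : facefield :=
  FF (Dx N h nu) (Dy N h nu) (Dz N h nu).

Definition gradnorm2sq (N : nat) (h : R) (nu : gf) : R :=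
  fip N h (grad N h nu) (grad N h nu).

Definition mobface (N : nat) (M : R -> R) (phi : gf) : facefield :=
  FF (fun i j k => M ((phi (sp N i) j k + phi i j k) / 2))
     (fun i j k => M ((phi i (sp N j) k + phi i j k) / 2))
     (fun i j k => M ((phi i j (sp N k) + phi i j k) / 2)).

Definition fmul (D f : facefield) : facefield :=
  FF (fun i j k => fx D i j k * fx f i j k)
     (fun i j k => fy D i j k * fy f i j k)
     (fun i j k => fz D i j k * fz f i j k).

Definition divh (N : nat) (h : R) (f : facefield) : gf := fun i j k =>
  (fx f i j k - fx f (pp N i) j k) / h +
  (fy f i j k - fy f i (pp N j) k) / h +
  (fz f i j k - fz f i j (pp N k)) / h.

Definition lap (N : nat) (h : R) (nu : gf) : gf := fun i j k =>
  (nu (sp N i) j k - 2 * nu i j k + nu (pp N i) j k) / h ^ 2 +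
  (nu i (sp N j) k - 2 * nu i j k + nu i (pp N j) k) / h ^ 2 +
  (nu i j (sp N k) - 2 * nu i j k + nu i j (pp N k)) / h ^ 2.

Definition cst1 : gf := fun _ _ _ => 1.

Definition Eh (N : nat) (h eps theta0 : R) (phi : gf) : R :=
  ip N h (fun i j k => 1 + phi i j k) (fun i j k => ln (1 + phi i j k)) +
  ip N h (fun i j k => 1 - phi i j k) (fun i j k => ln (1 - phi i j k)) +
  eps ^ 2 / 2 * gradnorm2sq N h phi -
  theta0 / 2 * norm2sq N h phi.

(* Main.v *)
Require Import Defs.
From Stdlib Require Import Reals.
From Coquelicot Require Import Coquelicot.
Open Scope R_scope.
From Stdlib Require Import Lra Lia IndefiniteDescription Classical.
Import Defs.
Open Scope R_scope.

Lemma rsum_ext n f g : (forall i, (i < n)%nat -> f i = g i) -> rsum n f = rsum n g.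
Proof.
  induction n; simpl; intros H; auto.
  rewrite IHn by (intros; apply H; lia). rewrite H by lia. reflexivity.
Qed.

Lemma rsum_plus n f g : rsum n (fun i => f i + g i) = rsum n f + rsum n g.
Proof. induction n; simpl; [lra|]. rewrite IHn. lra. Qed.

Lemma rsum_minus n f g : rsum n (fun i => f i - g i) = rsum n f - rsum n g.
Proof. induction n; simpl; [lra|]. rewrite IHn. lra. Qed.

Lemma rsum_scal n c f : rsum n (fun i => c * f i) = c * rsum n f.
Proof. induction n; simpl; [lra|]. rewrite IHn. lra. Qed.

Lemma rsum_le n f g : (forall i, (i < n)%nat -> f i <= g i) -> rsum n f <= rsum n g.
Proof.
  induction n; simpl; intros H; [lra|].
  assert (rsum n f <= rsum n g) by (apply IHn; intros; apply H; lia).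
  assert (f n <= g n) by (apply H; lia). lra.
Qed.

Lemma rsum_const n c : rsum n (fun _ => c) = INR n * c.
Proof. induction n; simpl rsum; [simpl; lra|]. rewrite IHn, S_INR. lra. Qed.

Lemma rsum_abs n f : Rabs (rsum n f) <= rsum n (fun i => Rabs (f i)).
Proof.
  induction n; simpl; [rewrite Rabs_R0; lra|].
  eapply Rle_trans; [apply Rabs_triang|]. lra.
Qed.

Lemma rsum_S n f : rsum (S n) f = rsum n f + f n.
Proof. reflexivity. Qed.

Lemma rsum_first n f : rsum (S n) f = f O + rsum n (fun i => f (S i)).
Proof. induction n; simpl in *; [lra|]. rewrite IHn. lra. Qed.

Lemma rsum_swap n m f :
  rsum n (fun i => rsum m (fun j => f i j)) = rsum m (fun j => rsum n (fun i => f i j)).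
Proof.
  induction n; simpl.
  - induction m; simpl; lra.
  - rewrite IHn. rewrite <- rsum_plus. reflexivity.
Qed.

Lemma rsum_split n m f : rsum (n + m) f = rsum n f + rsum m (fun i => f (n + i)%nat).
Proof.
  induction m; simpl.
  - rewrite Nat.add_0_r. lra.
  - rewrite Nat.add_succ_r. simpl. rewrite IHm. lra.
Qed.

Lemma rsum_rev n f : rsum n (fun i => f (n - 1 - i)%nat) = rsum n f.
Proof.
  induction n.
  - reflexivity.
  - rewrite rsum_first. rewrite (rsum_S n f).
    replace (S n - 1 - 0)%nat with n by lia.
    rewrite <- IHn. rewrite Rplus_comm. f_equal. apply rsum_ext. intros. f_equal. lia.
Qed.

Lemma sp_small N i : (S i < N)%nat -> sp N i = S i.
Proof. intros; unfold sp; apply Nat.mod_small; lia. Qed.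
Lemma sp_last N : (0 < N)%nat -> sp N (N - 1) = O.
Proof. intros; unfold sp. replace (S (N-1)) with N by lia. apply Nat.Div0.mod_same. Qed.
Lemma sp_lt N i : (0 < N)%nat -> (sp N i < N)%nat.
Proof. intros; unfold sp; apply Nat.mod_upper_bound; lia. Qed.
Lemma pp_lt N i : (0 < N)%nat -> (pp N i < N)%nat.
Proof. intros; unfold pp; apply Nat.mod_upper_bound; lia. Qed.

Lemma pp_sp N i : (i < N)%nat -> pp N (sp N i) = i.
Proof.
  intros H. destruct (Nat.lt_ge_cases (S i) N) as [H1|H1].
  - rewrite sp_small by lia. unfold pp.
    replace (S i + N - 1)%nat with (i + 1 * N)%nat by lia.
    rewrite Nat.Div0.mod_add. apply Nat.mod_small; lia.
  - replace i with (N - 1)%nat by lia. rewrite sp_last by lia. unfold pp.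
    replace (0 + N - 1)%nat with (N - 1)%nat by lia. apply Nat.mod_small; lia.
Qed.

Lemma sp_pp N i : (i < N)%nat -> sp N (pp N i) = i.
Proof.
  intros H. destruct i as [|i].
  - unfold pp. replace (0 + N - 1)%nat with (N - 1)%nat by lia.
    rewrite Nat.mod_small by lia. apply sp_last; lia.
  - unfold pp. replace (S i + N - 1)%nat with (i + 1 * N)%nat by lia.
    rewrite Nat.Div0.mod_add. rewrite Nat.mod_small by lia. apply sp_small; lia.
Qed.

Lemma rsum_sp N f : (0 < N)%nat -> rsum N (fun i => f (sp N i)) = rsum N f.
Proof.
  intros H. destruct N as [|n]; [lia|].
  rewrite rsum_S, rsum_first.
  replace (sp (S n) n) with O by (symmetry; replace n with (S n - 1)%nat at 2 by lia; apply sp_last; lia).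
  rewrite (rsum_ext n (fun i => f (sp (S n) i)) (fun i => f (S i))).
  - lra.
  - intros. rewrite sp_small by lia. reflexivity.
Qed.

Lemma rsum_pp_shift N (f : nat -> nat -> R) : (0 < N)%nat ->
  rsum N (fun i => f (pp N i) i) = rsum N (fun i => f i (sp N i)).
Proof.
  intros H. rewrite <- (rsum_sp N (fun i => f (pp N i) i)) by auto.
  apply rsum_ext. intros. rewrite pp_sp by auto. reflexivity.
Qed.

Lemma sum3_ext N f g : (forall i j k, (i < N)%nat -> (j < N)%nat -> (k < N)%nat -> f i j k = g i j k) ->
  sum3 N f = sum3 N g.
Proof.
  intros H. unfold sum3. apply rsum_ext; intros. apply rsum_ext; intros.
  apply rsum_ext; intros. auto.
Qed.

Lemma sum3_plus N f g : sum3 N (fun i j k => f i j k + g i j k) = sum3 N f + sum3 N g.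
Proof.
  unfold sum3. rewrite <- rsum_plus. apply rsum_ext; intros.
  rewrite <- rsum_plus. apply rsum_ext; intros. apply rsum_plus.
Qed.

Lemma sum3_minus N f g : sum3 N (fun i j k => f i j k - g i j k) = sum3 N f - sum3 N g.
Proof.
  unfold sum3. rewrite <- rsum_minus. apply rsum_ext; intros.
  rewrite <- rsum_minus. apply rsum_ext; intros. apply rsum_minus.
Qed.

Lemma sum3_scal N c f : sum3 N (fun i j k => c * f i j k) = c * sum3 N f.
Proof.
  unfold sum3. rewrite <- rsum_scal. apply rsum_ext; intros.
  rewrite <- rsum_scal. apply rsum_ext; intros. apply rsum_scal.
Qed.

Lemma sum3_le N f g : (forall i j k, (i < N)%nat -> (j < N)%nat -> (k < N)%nat -> f i j k <= g i j k) ->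
  sum3 N f <= sum3 N g.
Proof.
  intros H. unfold sum3. apply rsum_le; intros. apply rsum_le; intros.
  apply rsum_le; intros. auto.
Qed.

Lemma sum3_const N c : sum3 N (fun _ _ _ => c) = INR N ^ 3 * c.
Proof.
  unfold sum3. rewrite (rsum_ext N _ (fun _ => INR N * (INR N * c))).
  - rewrite rsum_const. ring.
  - intros. rewrite (rsum_ext N _ (fun _ => INR N * c)).
    + apply rsum_const.
    + intros. apply rsum_const.
Qed.

Lemma sum3_x N g m : (0 < N)%nat ->
  sum3 N (fun i j k => g (pp N i) j k * m i j k) = sum3 N (fun i j k => g i j k * m (sp N i) j k).
Proof.
  intros H. unfold sum3.
  apply (rsum_pp_shift N (fun a b => rsum N (fun j => rsum N (fun k => g a j k * m b j k)))); auto.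
Qed.

Lemma sum3_y N g m : (0 < N)%nat ->
  sum3 N (fun i j k => g i (pp N j) k * m i j k) = sum3 N (fun i j k => g i j k * m i (sp N j) k).
Proof.
  intros H. unfold sum3. apply rsum_ext; intros i Hi.
  apply (rsum_pp_shift N (fun a b => rsum N (fun k => g i a k * m i b k))); auto.
Qed.

Lemma sum3_z N g m : (0 < N)%nat ->
  sum3 N (fun i j k => g i j (pp N k) * m i j k) = sum3 N (fun i j k => g i j k * m i j (sp N k)).
Proof.
  intros H. unfold sum3. apply rsum_ext; intros i Hi. apply rsum_ext; intros j Hj.
  apply (rsum_pp_shift N (fun a b => g i j a * m i j b)); auto.
Qed.

Lemma sbp N h F mu : (0 < N)%nat -> h <> 0 ->
  sum3 N (fun i j k => divh N h F i j k * mu i j k) =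
  - sum3 N (fun i j k => fx F i j k * Dx N h mu i j k + fy F i j k * Dy N h mu i j k
                         + fz F i j k * Dz N h mu i j k).
Proof.
  intros HN Hh.
  transitivity (/h * (sum3 N (fun i j k => fx F i j k * mu i j k)
                     - sum3 N (fun i j k => fx F (pp N i) j k * mu i j k)
                     + sum3 N (fun i j k => fy F i j k * mu i j k)
                     - sum3 N (fun i j k => fy F i (pp N j) k * mu i j k)
                     + sum3 N (fun i j k => fz F i j k * mu i j k)
                     - sum3 N (fun i j k => fz F i j (pp N k) * mu i j k))).
  { repeat (rewrite <- sum3_minus || rewrite <- sum3_plus); rewrite <- sum3_scal.
    apply sum3_ext; intros. unfold divh. field. auto. }
  rewrite (sum3_x N (fx F) mu), (sum3_y N (fy F) mu), (sum3_z N (fz F) mu) by auto.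
  transitivity (- (/h * (sum3 N (fun i j k => fx F i j k * mu (sp N i) j k)
                     - sum3 N (fun i j k => fx F i j k * mu i j k)
                     + sum3 N (fun i j k => fy F i j k * mu i (sp N j) k)
                     - sum3 N (fun i j k => fy F i j k * mu i j k)
                     + sum3 N (fun i j k => fz F i j k * mu i j (sp N k))
                     - sum3 N (fun i j k => fz F i j k * mu i j k)))).
  { ring. }
  f_equal.
  repeat (rewrite <- sum3_minus || rewrite <- sum3_plus); rewrite <- sum3_scal.
  apply sum3_ext; intros. unfold Dx, Dy, Dz. field. auto.
Qed.

Lemma lap_div N h nu i j k : (i < N)%nat -> (j < N)%nat -> (k < N)%nat -> h <> 0 ->
  lap N h nu i j k = divh N h (grad N h nu) i j k.
Proof.
  intros Hi Hj Hk Hh. unfold lap, divh, grad, Dx, Dy, Dz; simpl.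
  rewrite !sp_pp by auto. field. auto.
Qed.

Lemma ln_le_sub1 x : 0 < x -> ln x <= x - 1.
Proof. intros. pose proof (exp_ineq1_le (ln x)). rewrite exp_ln in H0 by auto. lra. Qed.

Lemma xlnx_conv u v : 0 < u -> 0 < v -> u * ln u - v * ln v <= (ln u + 1) * (u - v).
Proof.
  intros Hu Hv.
  assert (H1 : ln (u / v) <= u / v - 1) by (apply ln_le_sub1; apply Rdiv_lt_0_compat; auto).
  unfold Rdiv in H1. rewrite ln_mult, ln_Rinv in H1 by (auto; apply Rinv_0_lt_compat; auto).
  assert (H2 : v * (ln u - ln v) <= v * (u * / v - 1)) by (apply Rmult_le_compat_l; lra).
  replace (v * (u * / v - 1)) with (u - v) in H2 by (field; lra).
  nra.
Qed.

Lemma Sconv a b : -1 < a < 1 -> -1 < b < 1 ->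
  (1 + a) * ln (1 + a) + (1 - a) * ln (1 - a) <=
  (1 + b) * ln (1 + b) + (1 - b) * ln (1 - b) + (a - b) * (ln (1 + a) - ln (1 - a)).
Proof.
  intros Ha Hb.
  pose proof (xlnx_conv (1 + a) (1 + b) ltac:(lra) ltac:(lra)).
  pose proof (xlnx_conv (1 - a) (1 - b) ltac:(lra) ltac:(lra)).
  nra.
Qed.

Definition Gpt N h (a b : gf) i j k :=
  Dx N h a i j k * Dx N h b i j k + Dy N h a i j k * Dy N h b i j k + Dz N h a i j k * Dz N h b i j k.

Lemma energy_step N h eps theta dt (a b mu : gf) F :
  (0 < N)%nat -> 0 < h -> 0 < dt -> 0 < theta ->
  (forall i j k, (i < N)%nat -> (j < N)%nat -> (k < N)%nat -> -1 < a i j k < 1 /\ -1 < b i j k < 1) ->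
  (forall i j k, (i < N)%nat -> (j < N)%nat -> (k < N)%nat ->
     (a i j k - b i j k) / dt = divh N h F i j k /\
     mu i j k = ln (1 + a i j k) - ln (1 - a i j k) - theta * b i j k - eps ^ 2 * lap N h a i j k) ->
  Eh N h eps theta a + dt * fip N h F (grad N h mu) <= Eh N h eps theta b.
Proof.
  intros HN Hh Hdt Hth Hab Hs.
  set (d := fun i j k => a i j k - b i j k).
  assert (E1 : sum3 N (fun i j k => d i j k * mu i j k) =
               - dt * sum3 N (fun i j k => fx F i j k * Dx N h mu i j k + fy F i j k * Dy N h mu i j k
                         + fz F i j k * Dz N h mu i j k)).
  { transitivity (dt * sum3 N (fun i j k => divh N h F i j k * mu i j k)).
    - rewrite <- sum3_scal. apply sum3_ext; intros. destruct (Hs i j k) as [Hq _]; auto.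
      unfold d. rewrite <- Hq. field. lra.
    - rewrite sbp by (auto; lra). ring. }
  assert (E2 : sum3 N (fun i j k => d i j k * lap N h a i j k) = - sum3 N (Gpt N h a d)).
  { rewrite (sum3_ext N _ (fun i j k => divh N h (grad N h a) i j k * d i j k)).
    - rewrite sbp by (auto; lra). reflexivity.
    - intros. rewrite lap_div by (auto; lra). ring. }
  assert (E3 : sum3 N (fun i j k => d i j k * mu i j k) =
     sum3 N (fun i j k => d i j k * (ln (1 + a i j k) - ln (1 - a i j k)))
     - theta * sum3 N (fun i j k => d i j k * b i j k)
     - eps ^ 2 * sum3 N (fun i j k => d i j k * lap N h a i j k)).
  { rewrite <- !sum3_scal, <- !sum3_minus. apply sum3_ext; intros.
    destruct (Hs i j k) as [_ Hq2]; auto. rewrite Hq2. ring. }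
  assert (I1 : sum3 N (fun i j k => (1 + a i j k) * ln (1 + a i j k)) +
               sum3 N (fun i j k => (1 - a i j k) * ln (1 - a i j k)) <=
               sum3 N (fun i j k => (1 + b i j k) * ln (1 + b i j k)) +
               sum3 N (fun i j k => (1 - b i j k) * ln (1 - b i j k)) +
               sum3 N (fun i j k => d i j k * (ln (1 + a i j k) - ln (1 - a i j k)))).
  { rewrite <- !sum3_plus. apply sum3_le; intros.
    destruct (Hab i j k) as [Ha1 Ha2]; auto. apply Sconv; auto. }
  assert (I2 : sum3 N (fun i j k => d i j k * b i j k) <=
               / 2 * sum3 N (fun i j k => a i j k * a i j k) - / 2 * sum3 N (fun i j k => b i j k * b i j k)).
  { rewrite <- !sum3_scal, <- sum3_minus. apply sum3_le; intros. unfold d. assert (Hq := Rle_0_sqr (a i j k - b i j k)); unfold Rsqr in Hq. lra. }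
  assert (I3 : sum3 N (Gpt N h a a) <= sum3 N (Gpt N h b b) + 2 * sum3 N (Gpt N h a d)).
  { rewrite <- sum3_scal, <- sum3_plus. apply sum3_le; intros. unfold Gpt, d, Dx, Dy, Dz.
    set (x1 := (a (sp N i) j k - a i j k) / h). set (x2 := (b (sp N i) j k - b i j k) / h).
    set (y1 := (a i (sp N j) k - a i j k) / h). set (y2 := (b i (sp N j) k - b i j k) / h).
    set (z1 := (a i j (sp N k) - a i j k) / h). set (z2 := (b i j (sp N k) - b i j k) / h).
    replace ((a (sp N i) j k - b (sp N i) j k - (a i j k - b i j k)) / h) with (x1 - x2)
      by (unfold x1, x2; field; lra).
    replace ((a i (sp N j) k - b i (sp N j) k - (a i j k - b i j k)) / h) with (y1 - y2)
      by (unfold y1, y2; field; lra).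
    replace ((a i j (sp N k) - b i j (sp N k) - (a i j k - b i j k)) / h) with (z1 - z2)
      by (unfold z1, z2; field; lra).
    assert (Q1 := Rle_0_sqr (x1 - x2)); assert (Q2 := Rle_0_sqr (y1 - y2));
    assert (Q3 := Rle_0_sqr (z1 - z2)); unfold Rsqr in *. lra. }
  unfold Eh, norm2sq, gradnorm2sq, ip, fip, grad. cbn [fx fy fz].
  fold (Gpt N h a a). fold (Gpt N h b b).
  change (sum3 N (fun i j k => Dx N h a i j k * Dx N h a i j k + Dy N h a i j k * Dy N h a i j k +
      Dz N h a i j k * Dz N h a i j k)) with (sum3 N (Gpt N h a a)).
  change (sum3 N (fun i j k => Dx N h b i j k * Dx N h b i j k + Dy N h b i j k * Dy N h b i j k +
      Dz N h b i j k * Dz N h b i j k)) with (sum3 N (Gpt N h b b)).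
  rewrite E2 in E3. rewrite E3 in E1.
  assert (Hh3 : 0 < h ^ 3) by (apply pow_lt; auto).
  assert (I2' := Rmult_le_compat_l theta _ _ ltac:(lra) I2).
  assert (I3' := Rmult_le_compat_l (eps ^ 2 / 2) _ _ ltac:(pose proof (pow2_ge_0 eps); lra) I3).
  set (Fm := sum3 N (fun i j k => fx F i j k * Dx N h mu i j k + fy F i j k * Dy N h mu i j k +
           fz F i j k * Dz N h mu i j k)) in *.
  set (S1a := sum3 N (fun i j k => (1 + a i j k) * ln (1 + a i j k))) in *.
  set (S2a := sum3 N (fun i j k => (1 - a i j k) * ln (1 - a i j k))) in *.
  set (S1b := sum3 N (fun i j k => (1 + b i j k) * ln (1 + b i j k))) in *.
  set (S2b := sum3 N (fun i j k => (1 - b i j k) * ln (1 - b i j k))) in *.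
  set (Ga := sum3 N (Gpt N h a a)) in *. set (Gb := sum3 N (Gpt N h b b)) in *.
  set (Gad := sum3 N (Gpt N h a d)) in *.
  set (Qa := sum3 N (fun i j k => a i j k * a i j k)) in *.
  set (Qb := sum3 N (fun i j k => b i j k * b i j k)) in *.
  set (Xl := sum3 N (fun i j k => d i j k * (ln (1 + a i j k) - ln (1 - a i j k)))) in *.
  set (Xb := sum3 N (fun i j k => d i j k * b i j k)) in *.
  assert (Hc : dt * Fm = - Xl + theta * Xb - eps ^ 2 * Gad) by lra.
  replace (h ^ 3 * S1a + h ^ 3 * S2a + eps ^ 2 / 2 * (h ^ 3 * Ga) - theta / 2 * (h ^ 3 * Qa) +
           dt * (h ^ 3 * Fm)) with
          (h ^ 3 * (S1a + S2a + eps ^ 2 / 2 * Ga - theta / 2 * Qa + dt * Fm)) by ring.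
  replace (h ^ 3 * S1b + h ^ 3 * S2b + eps ^ 2 / 2 * (h ^ 3 * Gb) - theta / 2 * (h ^ 3 * Qb)) with
          (h ^ 3 * (S1b + S2b + eps ^ 2 / 2 * Gb - theta / 2 * Qb)) by ring.
  apply Rmult_le_compat_l; [lra|].
  rewrite Hc. lra.
Qed.

Lemma xlnx_lower u : 0 < u -> u - 1 <= u * ln u.
Proof.
  intros Hu. pose proof (ln_le_sub1 (/ u) ltac:(apply Rinv_0_lt_compat; auto)).
  rewrite ln_Rinv in H by auto.
  assert (u * - ln u <= u * (/ u - 1)) by (apply Rmult_le_compat_l; lra).
  replace (u * (/ u - 1)) with (1 - u) in H0 by (field; lra). lra.
Qed.

Lemma xlnx_upper u : 0 < u < 2 -> u * ln u <= 2.
Proof.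
  intros Hu. pose proof (ln_le_sub1 u ltac:(lra)).
  assert (u * ln u <= u * (u - 1)) by (apply Rmult_le_compat_l; lra). nra.
Qed.

Lemma hN3 L N : (0 < N)%nat -> (L / INR N) ^ 3 * INR N ^ 3 = L ^ 3.
Proof. intros. assert (0 < INR N) by (apply lt_0_INR; auto). field. lra. Qed.

Lemma Eh_lower N h eps theta a : (0 < N)%nat -> 0 < h -> 0 < theta ->
  (forall i j k, (i < N)%nat -> (j < N)%nat -> (k < N)%nat -> -1 < a i j k < 1) ->
  eps ^ 2 / 2 * gradnorm2sq N h a - theta / 2 * (h ^ 3 * INR N ^ 3) <= Eh N h eps theta a.
Proof.
  intros HN Hh Hth Ha. unfold Eh, norm2sq, ip.
  assert (Hh3 : 0 < h ^ 3) by (apply pow_lt; auto).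
  assert (H1 : 0 <= sum3 N (fun i j k => (1 + a i j k) * ln (1 + a i j k)) +
                  sum3 N (fun i j k => (1 - a i j k) * ln (1 - a i j k))).
  { rewrite <- sum3_plus. rewrite <- (Rmult_0_r (INR N ^ 3)), <- sum3_const.
    apply sum3_le; intros i j k Hi Hj Hk. specialize (Ha i j k Hi Hj Hk).
    pose proof (xlnx_lower (1 + a i j k) ltac:(lra)).
    pose proof (xlnx_lower (1 - a i j k) ltac:(lra)). lra. }
  assert (H2 : sum3 N (fun i j k => a i j k * a i j k) <= INR N ^ 3).
  { rewrite <- (Rmult_1_r (INR N ^ 3)), <- sum3_const.
    apply sum3_le; intros i j k Hi Hj Hk. specialize (Ha i j k Hi Hj Hk). nra. }
  assert (h ^ 3 * sum3 N (fun i j k => a i j k * a i j k) <= h ^ 3 * INR N ^ 3)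
    by (apply Rmult_le_compat_l; lra).
  assert (0 <= h ^ 3 * (sum3 N (fun i j k => (1 + a i j k) * ln (1 + a i j k)) +
                  sum3 N (fun i j k => (1 - a i j k) * ln (1 - a i j k)))) by (apply Rmult_le_pos; lra).
  nra.
Qed.

Lemma Eh_upper N h eps theta a : (0 < N)%nat -> 0 < h -> 0 < theta ->
  (forall i j k, (i < N)%nat -> (j < N)%nat -> (k < N)%nat -> -1 < a i j k < 1) ->
  Eh N h eps theta a <= h ^ 3 * INR N ^ 3 * 4 + eps ^ 2 / 2 * gradnorm2sq N h a.
Proof.
  intros HN Hh Hth Ha. unfold Eh, norm2sq, ip.
  assert (Hh3 : 0 < h ^ 3) by (apply pow_lt; auto).
  assert (H1 : sum3 N (fun i j k => (1 + a i j k) * ln (1 + a i j k)) +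
                  sum3 N (fun i j k => (1 - a i j k) * ln (1 - a i j k)) <= INR N ^ 3 * 4).
  { rewrite <- sum3_plus. rewrite <- sum3_const.
    apply sum3_le; intros i j k Hi Hj Hk. specialize (Ha i j k Hi Hj Hk).
    pose proof (xlnx_upper (1 + a i j k) ltac:(lra)).
    pose proof (xlnx_upper (1 - a i j k) ltac:(lra)). lra. }
  assert (H2 : 0 <= sum3 N (fun i j k => a i j k * a i j k)).
  { rewrite <- (Rmult_0_r (INR N ^ 3)), <- sum3_const.
    apply sum3_le; intros. nra. }
  assert (h ^ 3 * (sum3 N (fun i j k => (1 + a i j k) * ln (1 + a i j k)) +
                  sum3 N (fun i j k => (1 - a i j k) * ln (1 - a i j k))) <= h ^ 3 * (INR N ^ 3 * 4))
    by (apply Rmult_le_compat_l; lra).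
  assert (0 <= h ^ 3 * sum3 N (fun i j k => a i j k * a i j k)) by (apply Rmult_le_pos; lra).
  assert (0 <= theta / 2 * (h ^ 3 * sum3 N (fun i j k => a i j k * a i j k))) by (apply Rmult_le_pos; lra).
  nra.
Qed.

Lemma grad_bound N h a D : 0 < h ->
  (forall i j k, (i < N)%nat -> (j < N)%nat -> (k < N)%nat ->
     Rabs (Dx N h a i j k) <= D /\ Rabs (Dy N h a i j k) <= D /\ Rabs (Dz N h a i j k) <= D) ->
  gradnorm2sq N h a <= h ^ 3 * INR N ^ 3 * (3 * D ^ 2).
Proof.
  intros Hh HD. unfold gradnorm2sq, fip, grad; cbn [fx fy fz].
  assert (Hh3 : 0 < h ^ 3) by (apply pow_lt; auto).
  rewrite Rmult_assoc. apply Rmult_le_compat_l; [lra|].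
  rewrite <- sum3_const. apply sum3_le; intros.
  destruct (HD i j k H H0 H1) as (A1 & A2 & A3).
  assert (Q : forall x, Rabs x <= D -> x * x <= D ^ 2).
  { intros x Hx. assert (0 <= Rabs x) by apply Rabs_pos.
    assert (x * x = Rabs x * Rabs x) by (rewrite <- Rabs_mult; symmetry; apply Rabs_right; nra).
    nra. }
  pose proof (Q _ A1); pose proof (Q _ A2); pose proof (Q _ A3). lra.
Qed.

Definition unc (f : fun3) : R * R * R -> R := fun p => f (fst (fst p)) (snd (fst p)) (snd p).

Lemma cont3_unc f : cont3 f <-> forall p, continuous (unc f) p.
Proof.
  split; intros H.
  - intros [[x y] z]. apply H.
  - intros x y z. apply (H (x, y, z)).
Qed.

Lemma cont3_plus f g : cont3 f -> cont3 g -> cont3 (fun x y z => f x y z + g x y z).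
Proof.
  intros Hf Hg x y z. apply (continuous_plus (unc f) (unc g)); [apply Hf|apply Hg].
Qed.

Lemma cont3_mult f g : cont3 f -> cont3 g -> cont3 (fun x y z => f x y z * g x y z).
Proof.
  intros Hf Hg x y z. apply (continuous_mult (unc f) (unc g)); [apply Hf|apply Hg].
Qed.

Lemma cont3_const c : cont3 (fun _ _ _ => c).
Proof. intros x y z. apply continuous_const. Qed.

Lemma cont3_x : cont3 (fun x _ _ => x).
Proof.
  intros x y z. unfold unc.
  apply (continuous_comp (fun p : R * R * R => fst p) fst).
  - apply continuous_fst.
  - apply continuous_fst.
Qed.

Lemma cont3_y : cont3 (fun _ y _ => y).
Proof.
  intros x y z.
  apply (continuous_comp (fun p : R * R * R => fst p) snd).
  - apply continuous_fst.
  - apply continuous_snd.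
Qed.

Lemma cont3_z : cont3 (fun _ _ z => z).
Proof. intros x y z. apply continuous_snd. Qed.

Lemma cont3_comp (g : R -> R) f : (forall t, continuous g t) -> cont3 f -> cont3 (fun x y z => g (f x y z)).
Proof.
  intros Hg Hf x y z. apply (continuous_comp (unc f) g); [apply Hf|apply Hg].
Qed.

Lemma cont3_abs f : cont3 f -> cont3 (fun x y z => Rabs (f x y z)).
Proof.
  intros Hf. apply cont3_comp; auto. intros t.
  apply (continuous_Rabs_comp (fun x => x)). apply continuous_id.
Qed.

Lemma cont_cos t : continuous cos t.
Proof. apply (continuous_cos_comp (fun x => x)). apply continuous_id. Qed.
Lemma cont_sin t : continuous sin t.
Proof. apply (continuous_sin_comp (fun x => x)). apply continuous_id. Qed.

Lemma cont3_ed f : cont3 f -> forall x y z (eps : posreal), exists d : posreal,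
  forall x' y' z', Rabs (x' - x) < d -> Rabs (y' - y) < d -> Rabs (z' - z) < d ->
  Rabs (f x' y' z' - f x y z) < eps.
Proof.
  intros Hf x y z eps.
  specialize (Hf x y z).
  destruct (proj1 (filterlim_locally _ _) Hf eps) as [d Hd].
  exists d. intros x' y' z' H1 H2 H3.
  specialize (Hd (x', y', z')). apply Hd.
  split; [split|]; simpl; auto.
Qed.

Lemma cont_of_ed (g : R -> R) t :
  (forall eps : posreal, exists d : posreal, forall t', Rabs (t' - t) < d -> Rabs (g t' - g t) < eps) ->
  continuous g t.
Proof.
  intros H. apply filterlim_locally. intros eps. destruct (H eps) as [d Hd].
  exists d. intros y Hy. apply Hd. exact Hy.
Qed.

Lemma ed_of_cont (g : R -> R) t : continuous g t ->
  forall eps : posreal, exists d : posreal, forall t', Rabs (t' - t) < d -> Rabs (g t' - g t) < eps.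
Proof.
  intros H eps. destruct (proj1 (filterlim_locally _ _) H eps) as [d Hd].
  exists d. intros t' Ht'. apply (Hd t'). exact Ht'.
Qed.

Lemma cont3_z_cont f x y z : cont3 f -> continuous (fun t => f x y t) z.
Proof.
  intros Hf. apply cont_of_ed. intros eps. destruct (cont3_ed f Hf x y z eps) as [d Hd].
  exists d. intros t' Ht'. apply Hd; auto; rewrite Rminus_diag, Rabs_R0; apply cond_pos.
Qed.
Lemma cont3_y_cont f x y z : cont3 f -> continuous (fun t => f x t z) y.
Proof.
  intros Hf. apply cont_of_ed. intros eps. destruct (cont3_ed f Hf x y z eps) as [d Hd].
  exists d. intros t' Ht'. apply Hd; auto; rewrite Rminus_diag, Rabs_R0; apply cond_pos.
Qed.
Lemma cont3_x_cont f x y z : cont3 f -> continuous (fun t => f t y z) x.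
Proof.
  intros Hf. apply cont_of_ed. intros eps. destruct (cont3_ed f Hf x y z eps) as [d Hd].
  exists d. intros t' Ht'. apply Hd; auto; rewrite Rminus_diag, Rabs_R0; apply cond_pos.
Qed.

Lemma cont_abs (g : R -> R) t : continuous g t -> continuous (fun s => Rabs (g s)) t.
Proof.
  intros H. apply cont_of_ed. intros eps. destruct (ed_of_cont g t H eps) as [d Hd].
  exists d. intros t' Ht'. eapply Rle_lt_trans; [apply Rabs_triang_inv2|]. auto.
Qed.

Definition cont2 (g : R -> R -> R) := forall x y, continuity_2d_pt g x y.

Lemma cont3_2d_yz f x : cont3 f -> cont2 (fun y z => f x y z).
Proof.
  intros Hf y z eps. destruct (cont3_ed f Hf x y z eps) as [d Hd].
  exists d. intros u v Hu Hv. apply Hd; auto. rewrite Rminus_diag, Rabs_R0; apply cond_pos.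
Qed.
Lemma cont3_2d_xz f y : cont3 f -> cont2 (fun x z => f x y z).
Proof.
  intros Hf x z eps. destruct (cont3_ed f Hf x y z eps) as [d Hd].
  exists d. intros u v Hu Hv. apply Hd; auto. rewrite Rminus_diag, Rabs_R0; apply cond_pos.
Qed.

Lemma cont2_y_cont g x y : cont2 g -> continuous (fun t => g x t) y.
Proof.
  intros Hg. apply cont_of_ed. intros eps. destruct (Hg x y eps) as [d Hd].
  exists d. intros t' Ht'. apply Hd; auto. rewrite Rminus_diag, Rabs_R0; apply cond_pos.
Qed.
Lemma cont2_x_cont g x y : cont2 g -> continuous (fun t => g t y) x.
Proof.
  intros Hg. apply cont_of_ed. intros eps. destruct (Hg x y eps) as [d Hd].
  exists d. intros t' Ht'. apply Hd; auto. rewrite Rminus_diag, Rabs_R0; apply cond_pos.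
Qed.

Lemma ex_RInt_cont (g : R -> R) a b : (forall t, continuous g t) -> ex_RInt g a b.
Proof. intros H. apply (ex_RInt_continuous (V := R_CompleteNormedModule)). intros; apply H. Qed.

Lemma unif_z f a b : cont3 f -> forall x y (eps : posreal), exists d : posreal,
  forall x' y' z, Rabs (x' - x) < d -> Rabs (y' - y) < d -> a <= z <= b ->
  Rabs (f x' y' z - f x y z) < eps.
Proof.
  intros Hf x y eps.
  assert (He2 : 0 < eps / 2) by (pose proof (cond_pos eps); lra).
  set (del := fun t => proj1_sig (constructive_indefinite_description _ (cont3_ed f Hf x y t (mkposreal _ He2)))).
  assert (Hdel : forall t x' y' z', Rabs (x' - x) < del t -> Rabs (y' - y) < del t -> Rabs (z' - t) < del t ->
                 Rabs (f x' y' z' - f x y t) < eps / 2).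
  { intros t. unfold del. destruct (constructive_indefinite_description _ _) as [d Hd]. simpl. apply Hd. }
  assert (Hp : forall t, 0 < del t / 2) by (intros; pose proof (cond_pos (del t)); lra).
  destruct (compactness_value_1d a b (fun t => mkposreal _ (Hp t))) as [d Hd].
  exists d. intros x' y' z Hx Hy Hz.
  specialize (Hd z Hz). apply NNPP in Hd. destruct Hd as [t [Ht [Hzt Hdt]]]. simpl in Hzt, Hdt.
  pose proof (cond_pos (del t)).
  assert (A1 : Rabs (f x' y' z - f x y t) < eps / 2) by (apply Hdel; lra).
  assert (A2 : Rabs (f x y z - f x y t) < eps / 2) by (apply Hdel; rewrite ?Rminus_diag, ?Rabs_R0; lra).
  replace (f x' y' z - f x y z) with ((f x' y' z - f x y t) - (f x y z - f x y t)) by ring.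
  eapply Rle_lt_trans; [apply Rabs_triang|]. rewrite Rabs_Ropp. lra.
Qed.

Section Int.
Variable L : R.
Hypothesis HL : 0 < L.

Lemma RInt_plusR (f g : R -> R) a b : ex_RInt f a b -> ex_RInt g a b ->
  RInt (fun t => f t + g t) a b = RInt f a b + RInt g a b.
Proof. intros. apply (RInt_plus f g); auto. Qed.
Lemma RInt_minusR (f g : R -> R) a b : ex_RInt f a b -> ex_RInt g a b ->
  RInt (fun t => f t - g t) a b = RInt f a b - RInt g a b.
Proof. intros. apply (RInt_minus f g); auto. Qed.
Lemma RInt_scalR (f : R -> R) c a b : ex_RInt f a b ->
  RInt (fun t => c * f t) a b = c * RInt f a b.
Proof. intros. apply (RInt_scal f a b c); auto. Qed.

Lemma exz f x y : cont3 f -> ex_RInt (fun z => f x y z) 0 L.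
Proof. intros Hf. apply ex_RInt_cont. intros; apply cont3_z_cont; auto. Qed.

Lemma cont2_Iz f : cont3 f -> cont2 (fun x y => RInt (fun z => f x y z) 0 L).
Proof.
  intros Hf x y eps.
  assert (He : 0 < eps / (L + 1)) by (apply Rdiv_lt_0_compat; [apply cond_pos|lra]).
  destruct (unif_z f 0 L Hf x y (mkposreal _ He)) as [d Hd]. simpl in Hd.
  exists d. intros u v Hu Hv.
  rewrite <- RInt_minusR by (apply exz; auto).
  eapply Rle_lt_trans.
  - apply (abs_RInt_le_const _ 0 L (eps / (L + 1))); [lra| |].
    + apply (ex_RInt_minus (V := R_NormedModule)); apply exz; auto.
    + intros t Ht. left. apply Hd; auto.
  - pose proof (cond_pos eps). replace ((L - 0) * (eps / (L + 1))) with (eps - eps / (L + 1)) by (field; lra).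
    lra.
Qed.

Lemma exy g x : cont2 g -> ex_RInt (fun y => g x y) 0 L.
Proof. intros Hg. apply ex_RInt_cont. intros; apply cont2_y_cont; auto. Qed.

Lemma cont_Iy g c : cont2 g -> continuous (fun x => RInt (fun y => g x y) 0 L) c.
Proof.
  intros Hg. apply cont_of_ed. intros eps.
  assert (He : 0 < eps / (L + 1)) by (apply Rdiv_lt_0_compat; [apply cond_pos|lra]).
  destruct (uniform_continuity_2d_1d' g 0 L c ltac:(intros; apply Hg) (mkposreal _ He)) as [d Hd].
  simpl in Hd. exists d. intros t' Ht'.
  rewrite <- RInt_minusR by (apply exy; auto).
  eapply Rle_lt_trans.
  - apply (abs_RInt_le_const _ 0 L (eps / (L + 1))); [lra| |].
    + apply (ex_RInt_minus (V := R_NormedModule)); apply exy; auto.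
    + intros t Ht. left. pose proof (cond_pos d).
      pose proof (proj1 (Rabs_lt_between' _ _ _) Ht').
      apply Hd; try lra. rewrite Rminus_diag, Rabs_R0. lra.
  - pose proof (cond_pos eps). replace ((L - 0) * (eps / (L + 1))) with (eps - eps / (L + 1)) by (field; lra).
    lra.
Qed.

Lemma exyz f x : cont3 f -> ex_RInt (fun y => RInt (fun z => f x y z) 0 L) 0 L.
Proof. intros Hf. exact (exy (fun x y => RInt (fun z => f x y z) 0 L) x (cont2_Iz f Hf)). Qed.
Lemma cont_Iyz f c : cont3 f -> continuous (fun x => RInt (fun y => RInt (fun z => f x y z) 0 L) 0 L) c.
Proof. intros Hf. exact (cont_Iy (fun x y => RInt (fun z => f x y z) 0 L) c (cont2_Iz f Hf)). Qed.
Lemma cont_Iz_y f x y : cont3 f -> continuous (fun t => RInt (fun z => f x t z) 0 L) y.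
Proof. intros Hf. exact (cont2_y_cont (fun x y => RInt (fun z => f x y z) 0 L) x y (cont2_Iz f Hf)). Qed.
Lemma exx f : cont3 f -> ex_RInt (fun x => RInt (fun y => RInt (fun z => f x y z) 0 L) 0 L) 0 L.
Proof. intros Hf. apply ex_RInt_cont. intros; apply cont_Iyz; auto. Qed.

Definition I1 (f : fun3) x y := RInt (fun z => f x y z) 0 L.
Definition I2 (f : fun3) x := RInt (fun y => I1 f x y) 0 L.

Lemma intOmega_I f : intOmega L f = RInt (I2 f) 0 L.
Proof. reflexivity. Qed.

Lemma intOmega_lin (op : R -> R -> R) f g :
  (forall (u v : R -> R), ex_RInt u 0 L -> ex_RInt v 0 L ->
      RInt (fun t => op (u t) (v t)) 0 L = op (RInt u 0 L) (RInt v 0 L)) ->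
  cont3 f -> cont3 g ->
  intOmega L (fun x y z => op (f x y z) (g x y z)) = op (intOmega L f) (intOmega L g).
Proof.
  intros Hop Hf Hg. rewrite !intOmega_I.
  rewrite <- (Hop (I2 f) (I2 g)) by (unfold I2, I1; apply exx; auto).
  apply RInt_ext; intros x _. unfold I2.
  rewrite <- (Hop (fun y => I1 f x y) (fun y => I1 g x y)) by (unfold I1; apply exyz; auto).
  apply RInt_ext; intros y _. unfold I1.
  apply (Hop (fun z => f x y z) (fun z => g x y z)); apply exz; auto.
Qed.

Lemma intOmega_plus f g : cont3 f -> cont3 g ->
  intOmega L (fun x y z => f x y z + g x y z) = intOmega L f + intOmega L g.
Proof. intros. apply (intOmega_lin Rplus); auto. intros; apply RInt_plusR; auto. Qed.

Lemma intOmega_minus f g : cont3 f -> cont3 g ->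
  intOmega L (fun x y z => f x y z - g x y z) = intOmega L f - intOmega L g.
Proof. intros. apply (intOmega_lin Rminus); auto. intros; apply RInt_minusR; auto. Qed.

Lemma intOmega_scal c f : cont3 f ->
  intOmega L (fun x y z => c * f x y z) = c * intOmega L f.
Proof.
  intros. apply (intOmega_lin (fun _ b => c * b) f f); auto. intros; apply RInt_scalR; auto.
Qed.

Lemma intOmega_ext f g : (forall x y z, f x y z = g x y z) -> intOmega L f = intOmega L g.
Proof.
  intros H. unfold intOmega. apply RInt_ext; intros. apply RInt_ext; intros. apply RInt_ext; intros. auto.
Qed.

Lemma intOmega_le f g : cont3 f -> cont3 g -> (forall x y z, f x y z <= g x y z) ->
  intOmega L f <= intOmega L g.
Proof.
  intros Hf Hg H. unfold intOmega.
  apply RInt_le; [lra|apply exx; auto|apply exx; auto|]. intros x _.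
  apply RInt_le; [lra|apply exyz; auto|apply exyz; auto|]. intros y _.
  apply RInt_le; [lra|apply exz; auto|apply exz; auto|]. intros z _. auto.
Qed.

Lemma intOmega_abs f : cont3 f -> Rabs (intOmega L f) <= intOmega L (fun x y z => Rabs (f x y z)).
Proof.
  intros Hf. assert (Ha := cont3_abs f Hf). unfold intOmega.
  eapply Rle_trans; [apply abs_RInt_le; [lra|apply exx; auto]|].
  apply RInt_le; [lra| |apply (exx (fun x y z => Rabs (f x y z))); auto|].
  { apply ex_RInt_cont. intros. apply cont_abs.
    apply cont_Iyz; auto. }
  intros x _.
  eapply Rle_trans; [apply abs_RInt_le; [lra|apply exyz; auto]|].
  apply RInt_le; [lra| |apply (exyz (fun x y z => Rabs (f x y z))); auto|].
  { apply ex_RInt_cont. intros. apply cont_abs.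
    apply cont_Iz_y; auto. }
  intros y _.
  apply abs_RInt_le; [lra|apply (exz f); auto].
Qed.

Lemma RInt_constR c a b : RInt (fun _ => c) a b = (b - a) * c.
Proof. rewrite RInt_const. reflexivity. Qed.

Lemma intOmega_const c : intOmega L (fun _ _ _ => c) = L ^ 3 * c.
Proof.
  unfold intOmega.
  rewrite (RInt_ext (fun x => RInt (fun y => RInt (fun z => c) 0 L) 0 L) (fun _ => L * (L * c))).
  - rewrite RInt_constR. ring.
  - intros x _. rewrite (RInt_ext (fun y => RInt (fun z => c) 0 L) (fun _ => L * c)).
    + rewrite RInt_constR, Rminus_0_r. reflexivity.
    + intros y _. rewrite RInt_constR, Rminus_0_r. reflexivity.
Qed.

End Int.

Lemma cont2d_ext (f g : R -> R -> R) x y : (forall u v, f u v = g u v) ->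
  continuity_2d_pt f x y -> continuity_2d_pt g x y.
Proof.
  intros H Hf eps. destruct (Hf eps) as [d Hd]. exists d. intros u v Hu Hv.
  rewrite <- !H. apply Hd; auto.
Qed.

Lemma RInt_FTC (F F' : R -> R) a b :
  (forall t, is_derive F t (F' t)) -> (forall t, continuous F' t) ->
  RInt F' a b = F b - F a.
Proof.
  intros H1 H2. apply is_RInt_unique.
  apply (is_RInt_derive (V := R_CompleteNormedModule) F F'); intros; auto.
Qed.

Lemma RInt_zero a b : RInt (fun _ => 0) a b = 0.
Proof. rewrite RInt_constR. apply Rmult_0_r. Qed.

Lemma param_deriv (f f' : R -> R -> R) L y :
  0 < L ->
  (forall u t, is_derive (fun w => f w t) u (f' u t)) ->
  cont2 f' -> (forall u, ex_RInt (fun t => f u t) 0 L) ->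
  is_derive (fun u => RInt (fun t => f u t) 0 L) y (RInt (fun t => f' y t) 0 L).
Proof.
  intros HL Hd Hc He.
  assert (HD : forall u t, Derive (fun w => f w t) u = f' u t) by (intros; apply is_derive_unique; auto).
  replace (RInt (fun t => f' y t) 0 L) with (RInt (fun t => Derive (fun u => f u t) y) 0 L)
    by (apply RInt_ext; intros; auto).
  apply (is_derive_RInt_param f 0 L y).
  - apply filter_forall. intros u t _. eexists. apply Hd.
  - intros t _. apply (cont2d_ext f'); [intros; rewrite HD; auto|apply Hc].
  - apply filter_forall. intros u. apply He.
Qed.

Section IBP.
Variable L : R.
Hypothesis HL : 0 < L.

Lemma ibp_z (F F' : fun3) : cont3 F' -> (forall x y z, is_derive (fun t => F x y t) z (F' x y z)) ->
  (forall x y, F x y L = F x y 0) -> intOmega L F' = 0.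
Proof.
  intros Hc Hd Hp. unfold intOmega.
  transitivity (RInt (fun _ => 0) 0 L); [|apply RInt_zero]. apply RInt_ext; intros x _.
  transitivity (RInt (fun _ => 0) 0 L); [|apply RInt_zero]. apply RInt_ext; intros y _.
  rewrite (RInt_FTC (fun t => F x y t) (fun t => F' x y t)).
  - rewrite Hp. apply Rminus_diag_eq; reflexivity.
  - intros; apply Hd.
  - intros; apply cont3_z_cont; auto.
Qed.

Lemma ibp_y (F F' : fun3) : cont3 F -> cont3 F' -> (forall x y z, is_derive (fun t => F x t z) y (F' x y z)) ->
  (forall x z, F x L z = F x 0 z) -> intOmega L F' = 0.
Proof.
  intros Hc0 Hc Hd Hp. unfold intOmega.
  transitivity (RInt (fun _ => 0) 0 L); [|apply RInt_zero]. apply RInt_ext; intros x _.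
  rewrite (RInt_FTC (fun y => RInt (fun z => F x y z) 0 L) (fun y => RInt (fun z => F' x y z) 0 L)).
  - rewrite (RInt_ext (fun z => F x L z) (fun z => F x 0 z)); [apply Rminus_diag_eq; reflexivity|]. intros; apply Hp.
  - intros y. apply (param_deriv (fun u t => F x u t) (fun u t => F' x u t)); auto.
    + apply (cont3_2d_yz F'); auto.
    + intros; apply (exz L F); auto.
  - intros y. apply (cont_Iz_y L HL F'); auto.
Qed.

Lemma ibp_x (F F' : fun3) : cont3 F -> cont3 F' -> (forall x y z, is_derive (fun t => F t y z) x (F' x y z)) ->
  (forall y z, F L y z = F 0 y z) -> intOmega L F' = 0.
Proof.
  intros Hc0 Hc Hd Hp. unfold intOmega.
  assert (Hg : forall u y, is_derive (fun w => RInt (fun z => F w y z) 0 L) u (RInt (fun z => F' u y z) 0 L)).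
  { intros u y. apply (param_deriv (fun w t => F w y t) (fun w t => F' w y t)); auto.
    - apply (cont3_2d_xz F'); auto.
    - intros; apply (exz L F); auto. }
  rewrite (RInt_FTC (fun x => RInt (fun y => RInt (fun z => F x y z) 0 L) 0 L)
                    (fun x => RInt (fun y => RInt (fun z => F' x y z) 0 L) 0 L)).
  - rewrite (RInt_ext (fun y => RInt (fun z => F L y z) 0 L) (fun y => RInt (fun z => F 0 y z) 0 L)); [apply Rminus_diag_eq; reflexivity|].
    intros. apply RInt_ext. intros. apply Hp.
  - intros x. apply (param_deriv (fun w t => RInt (fun z => F w t z) 0 L) (fun w t => RInt (fun z => F' w t z) 0 L)); auto.
    + apply (cont2_Iz L HL F'); auto.
    + intros; apply (exyz L HL F); auto.
  - intros x. apply (cont_Iyz L HL F'); auto.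
Qed.

End IBP.

Lemma Ck_cont n f : Ck n f -> cont3 f.
Proof. destruct n; simpl; tauto. Qed.

Lemma Ck_S n f : Ck (S n) f ->
  (forall x y z, ex_derive (fun t => f t y z) x /\ ex_derive (fun t => f x t z) y /\
                 ex_derive (fun t => f x y t) z) /\ Ck n (pdx f) /\ Ck n (pdy f) /\ Ck n (pdz f).
Proof. simpl; tauto. Qed.

Lemma Ck_iter_x m n f : Ck (m + n) f -> Ck m (Nat.iter n pdx f).
Proof.
  revert m f. induction n; intros m f H.
  - simpl. rewrite Nat.add_0_r in H. auto.
  - replace (m + S n)%nat with (S m + n)%nat in H by lia.
    specialize (IHn (S m) f H). simpl. apply Ck_S in IHn. tauto.
Qed.
Lemma Ck_iter_y m n f : Ck (m + n) f -> Ck m (Nat.iter n pdy f).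
Proof.
  revert m f. induction n; intros m f H.
  - simpl. rewrite Nat.add_0_r in H. auto.
  - replace (m + S n)%nat with (S m + n)%nat in H by lia.
    specialize (IHn (S m) f H). simpl. apply Ck_S in IHn. tauto.
Qed.
Lemma Ck_iter_z m n f : Ck (m + n) f -> Ck m (Nat.iter n pdz f).
Proof.
  revert m f. induction n; intros m f H.
  - simpl. rewrite Nat.add_0_r in H. auto.
  - replace (m + S n)%nat with (S m + n)%nat in H by lia.
    specialize (IHn (S m) f H). simpl. apply Ck_S in IHn. tauto.
Qed.

Lemma Derive_shift (g : R -> R) c x : Derive (fun t => g (t + c)) x = Derive g (x + c).
Proof.
  unfold Derive. f_equal. apply Lim_ext. intros h.
  replace (x + h + c) with (x + c + h) by ring. reflexivity.
Qed.

Lemma Derive_per (g : R -> R) L x : (forall t, g (t + L) = g t) -> Derive g (x + L) = Derive g x.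
Proof.
  intros H. rewrite <- Derive_shift. apply Derive_ext. auto.
Qed.

Lemma per_pdx L f : periodic3 L f -> periodic3 L (pdx f).
Proof.
  intros H x y z. unfold pdx. repeat split.
  - apply Derive_per. intros; apply H.
  - apply Derive_ext. intros; apply H.
  - apply Derive_ext. intros; apply H.
Qed.
Lemma per_pdy L f : periodic3 L f -> periodic3 L (pdy f).
Proof.
  intros H x y z. unfold pdy. repeat split.
  - apply Derive_ext. intros; apply H.
  - apply Derive_per. intros; apply H.
  - apply Derive_ext. intros; apply H.
Qed.
Lemma per_pdz L f : periodic3 L f -> periodic3 L (pdz f).
Proof.
  intros H x y z. unfold pdz. repeat split.
  - apply Derive_ext. intros; apply H.
  - apply Derive_ext. intros; apply H.
  - apply Derive_per. intros; apply H.
Qed.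

Lemma per_iter_x L n f : periodic3 L f -> periodic3 L (Nat.iter n pdx f).
Proof. induction n; simpl; auto. intros; apply per_pdx; auto. Qed.
Lemma per_iter_y L n f : periodic3 L f -> periodic3 L (Nat.iter n pdy f).
Proof. induction n; simpl; auto. intros; apply per_pdy; auto. Qed.
Lemma per_iter_z L n f : periodic3 L f -> periodic3 L (Nat.iter n pdz f).
Proof. induction n; simpl; auto. intros; apply per_pdz; auto. Qed.

Lemma cont3_ext f g : (forall x y z, f x y z = g x y z) -> cont3 f -> cont3 g.
Proof.
  intros H Hf x y z. apply (continuous_ext (unc f)); [intros [[a b] c]; apply H|apply Hf].
Qed.

Lemma cont3_lin a b c : cont3 (fun x y z => a * x + b * y + c * z).
Proof.
  apply (cont3_plus (fun x y z => a * x + b * y) (fun x y z => c * z)).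
  - apply (cont3_plus (fun x y z => a * x) (fun x y z => b * y)).
    + apply (cont3_mult (fun _ _ _ => a) (fun x _ _ => x)); [apply cont3_const|apply cont3_x].
    + apply (cont3_mult (fun _ _ _ => b) (fun _ y _ => y)); [apply cont3_const|apply cont3_y].
  - apply (cont3_mult (fun _ _ _ => c) (fun _ _ z => z)); [apply cont3_const|apply cont3_z].
Qed.

Definition isZ k := exists a b : nat, k = INR a - INR b.

Lemma cos_int t k : isZ k -> cos (t + 2 * PI * k) = cos t.
Proof.
  intros [a [b ->]].
  replace (t + 2 * PI * (INR a - INR b)) with ((t - 2 * INR b * PI) + 2 * INR a * PI) by ring.
  rewrite cos_period. rewrite <- (cos_period (t - 2 * INR b * PI) b). f_equal. ring.
Qed.
Lemma sin_int t k : isZ k -> sin (t + 2 * PI * k) = sin t.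
Proof.
  intros [a [b ->]].
  replace (t + 2 * PI * (INR a - INR b)) with ((t - 2 * INR b * PI) + 2 * INR a * PI) by ring.
  rewrite sin_period. rewrite <- (sin_period (t - 2 * INR b * PI) b). f_equal. ring.
Qed.

Lemma dsin (G : R -> R) G' (A : R -> R) w x : is_derive G x G' -> is_derive A x w ->
  is_derive (fun t => G t * sin (A t)) x (G' * sin (A x) + G x * (w * cos (A x))).
Proof.
  intros HG HA.
  assert (Hs : is_derive (fun t => sin (A t)) x (w * cos (A x))).
  { apply (is_derive_comp sin A x (cos (A x)) w); [apply is_derive_sin|auto]. }
  exact (is_derive_mult G (fun t => sin (A t)) x G' (w * cos (A x)) HG Hs Rmult_comm).
Qed.

Lemma dcos (G : R -> R) G' (A : R -> R) w x : is_derive G x G' -> is_derive A x w ->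
  is_derive (fun t => G t * cos (A t)) x (G' * cos (A x) + G x * (w * - sin (A x))).
Proof.
  intros HG HA.
  assert (Hs : is_derive (fun t => cos (A t)) x (w * - sin (A x))).
  { apply (is_derive_comp cos A x (- sin (A x)) w); [apply is_derive_cos|auto]. }
  exact (is_derive_mult G (fun t => cos (A t)) x G' (w * - sin (A x)) HG Hs Rmult_comm).
Qed.

Section Four.
Variable L : R.
Hypothesis HL : 0 < L.

Definition V k1 k2 k3 x y z := 2 * PI * (k1 * x + k2 * y + k3 * z) / L.

Lemma cont3_V k1 k2 k3 : cont3 (V k1 k2 k3).
Proof.
  apply (cont3_ext (fun x y z => (2 * PI * k1 / L) * x + (2 * PI * k2 / L) * y + (2 * PI * k3 / L) * z)).
  - intros. unfold V. field. lra.
  - apply cont3_lin.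
Qed.

Lemma cont3_gsin g k1 k2 k3 : cont3 g -> cont3 (fun x y z => g x y z * sin (V k1 k2 k3 x y z)).
Proof.
  intros Hg. apply (cont3_mult g (fun x y z => sin (V k1 k2 k3 x y z))); auto.
  apply (cont3_comp sin (V k1 k2 k3)); [apply cont_sin|apply cont3_V].
Qed.
Lemma cont3_gcos g k1 k2 k3 : cont3 g -> cont3 (fun x y z => g x y z * cos (V k1 k2 k3 x y z)).
Proof.
  intros Hg. apply (cont3_mult g (fun x y z => cos (V k1 k2 k3 x y z))); auto.
  apply (cont3_comp cos (V k1 k2 k3)); [apply cont_cos|apply cont3_V].
Qed.

Definition Ic g k1 k2 k3 := intOmega L (fun x y z => g x y z * cos (V k1 k2 k3 x y z)).
Definition Is g k1 k2 k3 := intOmega L (fun x y z => g x y z * sin (V k1 k2 k3 x y z)).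

Lemma split_lin g g' k1 k2 k3 w (T T' : R -> R) :
  cont3 g -> cont3 g' -> (forall t, continuous T t) -> (forall t, continuous T' t) ->
  intOmega L (fun x y z => g' x y z * T (V k1 k2 k3 x y z) + g x y z * (w * T' (V k1 k2 k3 x y z))) =
  intOmega L (fun x y z => g' x y z * T (V k1 k2 k3 x y z)) +
  w * intOmega L (fun x y z => g x y z * T' (V k1 k2 k3 x y z)).
Proof.
  intros Hg Hg' HT HT'.
  assert (C1 : cont3 (fun x y z => g' x y z * T (V k1 k2 k3 x y z))).
  { apply (cont3_mult g' (fun x y z => T (V k1 k2 k3 x y z))); auto.
    apply (cont3_comp T (V k1 k2 k3)); [auto|apply cont3_V]. }
  assert (C2 : cont3 (fun x y z => g x y z * T' (V k1 k2 k3 x y z))).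
  { apply (cont3_mult g (fun x y z => T' (V k1 k2 k3 x y z))); auto.
    apply (cont3_comp T' (V k1 k2 k3)); [auto|apply cont3_V]. }
  rewrite <- (intOmega_scal L HL w (fun x y z => g x y z * T' (V k1 k2 k3 x y z))) by auto.
  rewrite <- (intOmega_plus L HL (fun x y z => g' x y z * T (V k1 k2 k3 x y z))
                                 (fun x y z => w * (g x y z * T' (V k1 k2 k3 x y z)))); auto.
  - apply intOmega_ext. intros. ring.
  - apply (cont3_mult (fun _ _ _ => w) (fun x y z => g x y z * T' (V k1 k2 k3 x y z))); auto.
    apply cont3_const.
Qed.

Lemma cont_opp_sin t : continuous (fun s => - sin s) t.
Proof.
  apply cont_of_ed. intros eps. destruct (ed_of_cont sin t (cont_sin t) eps) as [d Hd].
  exists d. intros t' Ht'. replace (- sin t' - - sin t) with (- (sin t' - sin t)) by ring.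
  rewrite Rabs_Ropp. auto.
Qed.

Lemma cont3_TV (T : R -> R) k1 k2 k3 : (forall t, continuous T t) -> cont3 (fun x y z => T (V k1 k2 k3 x y z)).
Proof. intros. apply (cont3_comp T (V k1 k2 k3)); [auto|apply cont3_V]. Qed.

Lemma cont3_Fp g g' k1 k2 k3 w (T T' : R -> R) :
  cont3 g -> cont3 g' -> (forall t, continuous T t) -> (forall t, continuous T' t) ->
  cont3 (fun x y z => g' x y z * T (V k1 k2 k3 x y z) + g x y z * (w * T' (V k1 k2 k3 x y z))).
Proof.
  intros. apply (cont3_plus (fun x y z => g' x y z * T (V k1 k2 k3 x y z))
                            (fun x y z => g x y z * (w * T' (V k1 k2 k3 x y z)))).
  - apply (cont3_mult g' (fun x y z => T (V k1 k2 k3 x y z))); auto. apply cont3_TV; auto.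
  - apply (cont3_mult g (fun x y z => w * T' (V k1 k2 k3 x y z))); auto.
    apply (cont3_mult (fun _ _ _ => w) (fun x y z => T' (V k1 k2 k3 x y z))); [apply cont3_const|].
    apply cont3_TV; auto.
Qed.

Lemma Is_neg g k1 k2 k3 : cont3 g ->
  intOmega L (fun x y z => g x y z * - sin (V k1 k2 k3 x y z)) = - Is g k1 k2 k3.
Proof.
  intros Hg. unfold Is.
  transitivity (-1 * intOmega L (fun x y z => g x y z * sin (V k1 k2 k3 x y z))); [|ring].
  rewrite <- (intOmega_scal L HL (-1)) by (apply cont3_gsin; auto).
  apply intOmega_ext. intros. ring.
Qed.

Lemma rel_x g g' k1 k2 k3 : isZ k1 -> cont3 g -> cont3 g' ->
  (forall x y z, is_derive (fun t => g t y z) x (g' x y z)) -> (forall y z, g L y z = g 0 y z) ->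
  Is g' k1 k2 k3 + (2 * PI * k1 / L) * Ic g k1 k2 k3 = 0 /\
  Ic g' k1 k2 k3 - (2 * PI * k1 / L) * Is g k1 k2 k3 = 0.
Proof.
  intros Hk Hg Hg' Hd Hp.
  set (w := 2 * PI * k1 / L).
  assert (HA : forall x y z : R, is_derive (fun t => V k1 k2 k3 t y z) x w).
  { intros. unfold V, w. auto_derive; [auto|field; lra]. }
  assert (HV : forall x y z : R, V k1 k2 k3 L y z = V k1 k2 k3 0 y z + 2 * PI * k1).
  { intros. unfold V. field. lra. }
  split.
  - assert (H := ibp_x L HL (fun x y z => g x y z * sin (V k1 k2 k3 x y z))
        (fun x y z => g' x y z * sin (V k1 k2 k3 x y z) + g x y z * (w * cos (V k1 k2 k3 x y z)))
        (cont3_gsin g k1 k2 k3 Hg) (cont3_Fp g g' k1 k2 k3 w sin cos Hg Hg' cont_sin cont_cos)).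
    rewrite split_lin in H by (auto; apply cont_sin || apply cont_cos).
    apply H.
    + intros x y z. apply (dsin (fun t => g t y z) (g' x y z) (fun t => V k1 k2 k3 t y z) w x); auto.
    + intros y z. rewrite Hp, HV, sin_int; auto.
  - assert (H := ibp_x L HL (fun x y z => g x y z * cos (V k1 k2 k3 x y z))
        (fun x y z => g' x y z * cos (V k1 k2 k3 x y z) + g x y z * (w * - sin (V k1 k2 k3 x y z)))
        (cont3_gcos g k1 k2 k3 Hg) (cont3_Fp g g' k1 k2 k3 w cos (fun s => - sin s) Hg Hg' cont_cos cont_opp_sin)).
    rewrite (split_lin g g' k1 k2 k3 w cos (fun s => - sin s)) in H by (auto; apply cont_cos || apply cont_opp_sin).
    rewrite Is_neg in H by auto. unfold Ic.
    replace (intOmega L (fun x y z => g' x y z * cos (V k1 k2 k3 x y z)) - w * Is g k1 k2 k3)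
      with (intOmega L (fun x y z => g' x y z * cos (V k1 k2 k3 x y z)) + w * - Is g k1 k2 k3) by ring.
    apply H.
    + intros x y z. apply (dcos (fun t => g t y z) (g' x y z) (fun t => V k1 k2 k3 t y z) w x); auto.
    + intros y z. rewrite Hp, HV, cos_int; auto.
Qed.

Lemma rel_y g g' k1 k2 k3 : isZ k2 -> cont3 g -> cont3 g' ->
  (forall x y z, is_derive (fun t => g x t z) y (g' x y z)) -> (forall x z, g x L z = g x 0 z) ->
  Is g' k1 k2 k3 + (2 * PI * k2 / L) * Ic g k1 k2 k3 = 0 /\
  Ic g' k1 k2 k3 - (2 * PI * k2 / L) * Is g k1 k2 k3 = 0.
Proof.
  intros Hk Hg Hg' Hd Hp.
  set (w := 2 * PI * k2 / L).
  assert (HA : forall x y z : R, is_derive (fun t => V k1 k2 k3 x t z) y w).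
  { intros. unfold V, w. auto_derive; [auto|field; lra]. }
  assert (HV : forall x y z : R, V k1 k2 k3 x L z = V k1 k2 k3 x 0 z + 2 * PI * k2).
  { intros. unfold V. field. lra. }
  split.
  - assert (H := ibp_y L HL (fun x y z => g x y z * sin (V k1 k2 k3 x y z))
        (fun x y z => g' x y z * sin (V k1 k2 k3 x y z) + g x y z * (w * cos (V k1 k2 k3 x y z)))
        (cont3_gsin g k1 k2 k3 Hg) (cont3_Fp g g' k1 k2 k3 w sin cos Hg Hg' cont_sin cont_cos)).
    rewrite split_lin in H by (auto; apply cont_sin || apply cont_cos).
    apply H.
    + intros x y z. apply (dsin (fun t => g x t z) (g' x y z) (fun t => V k1 k2 k3 x t z) w y); auto.
    + intros x z. rewrite Hp, HV, sin_int; auto.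
  - assert (H := ibp_y L HL (fun x y z => g x y z * cos (V k1 k2 k3 x y z))
        (fun x y z => g' x y z * cos (V k1 k2 k3 x y z) + g x y z * (w * - sin (V k1 k2 k3 x y z)))
        (cont3_gcos g k1 k2 k3 Hg) (cont3_Fp g g' k1 k2 k3 w cos (fun s => - sin s) Hg Hg' cont_cos cont_opp_sin)).
    rewrite (split_lin g g' k1 k2 k3 w cos (fun s => - sin s)) in H by (auto; apply cont_cos || apply cont_opp_sin).
    rewrite Is_neg in H by auto. unfold Ic.
    replace (intOmega L (fun x y z => g' x y z * cos (V k1 k2 k3 x y z)) - w * Is g k1 k2 k3)
      with (intOmega L (fun x y z => g' x y z * cos (V k1 k2 k3 x y z)) + w * - Is g k1 k2 k3) by ring.
    apply H.
    + intros x y z. apply (dcos (fun t => g x t z) (g' x y z) (fun t => V k1 k2 k3 x t z) w y); auto.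
    + intros x z. rewrite Hp, HV, cos_int; auto.
Qed.

Lemma rel_z g g' k1 k2 k3 : isZ k3 -> cont3 g -> cont3 g' ->
  (forall x y z, is_derive (fun t => g x y t) z (g' x y z)) -> (forall x y, g x y L = g x y 0) ->
  Is g' k1 k2 k3 + (2 * PI * k3 / L) * Ic g k1 k2 k3 = 0 /\
  Ic g' k1 k2 k3 - (2 * PI * k3 / L) * Is g k1 k2 k3 = 0.
Proof.
  intros Hk Hg Hg' Hd Hp.
  set (w := 2 * PI * k3 / L).
  assert (HA : forall x y z : R, is_derive (fun t => V k1 k2 k3 x y t) z w).
  { intros. unfold V, w. auto_derive; [auto|field; lra]. }
  assert (HV : forall x y z : R, V k1 k2 k3 x y L = V k1 k2 k3 x y 0 + 2 * PI * k3).
  { intros. unfold V. field. lra. }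
  split.
  - assert (H := ibp_z L (fun x y z => g x y z * sin (V k1 k2 k3 x y z))
        (fun x y z => g' x y z * sin (V k1 k2 k3 x y z) + g x y z * (w * cos (V k1 k2 k3 x y z)))
         (cont3_Fp g g' k1 k2 k3 w sin cos Hg Hg' cont_sin cont_cos)).
    rewrite split_lin in H by (auto; apply cont_sin || apply cont_cos).
    apply H.
    + intros x y z. apply (dsin (fun t => g x y t) (g' x y z) (fun t => V k1 k2 k3 x y t) w z); auto.
    + intros x y. rewrite Hp, HV, sin_int; auto.
  - assert (H := ibp_z L (fun x y z => g x y z * cos (V k1 k2 k3 x y z))
        (fun x y z => g' x y z * cos (V k1 k2 k3 x y z) + g x y z * (w * - sin (V k1 k2 k3 x y z)))
         (cont3_Fp g g' k1 k2 k3 w cos (fun s => - sin s) Hg Hg' cont_cos cont_opp_sin)).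
    rewrite (split_lin g g' k1 k2 k3 w cos (fun s => - sin s)) in H by (auto; apply cont_cos || apply cont_opp_sin).
    rewrite Is_neg in H by auto. unfold Ic.
    replace (intOmega L (fun x y z => g' x y z * cos (V k1 k2 k3 x y z)) - w * Is g k1 k2 k3)
      with (intOmega L (fun x y z => g' x y z * cos (V k1 k2 k3 x y z)) + w * - Is g k1 k2 k3) by ring.
    apply H.
    + intros x y z. apply (dcos (fun t => g x y t) (g' x y z) (fun t => V k1 k2 k3 x y t) w z); auto.
    + intros x y. rewrite Hp, HV, cos_int; auto.
Qed.

End Four.

Lemma decay_abs (c s : nat -> R) w :
  (forall n, (n < 6)%nat -> s (S n) + w * c n = 0 /\ c (S n) - w * s n = 0) ->
  Rabs w ^ 6 * (Rabs (c 0%nat) + Rabs (s 0%nat)) = Rabs (c 6%nat) + Rabs (s 6%nat).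
Proof.
  intros H.
  assert (forall n, (n <= 6)%nat -> Rabs w ^ n * (Rabs (c 0%nat) + Rabs (s 0%nat)) = Rabs (c n) + Rabs (s n)).
  { induction n; intros Hn.
    - simpl. ring.
    - destruct (H n ltac:(lia)) as [H1 H2].
      replace (s (S n)) with (- (w * c n)) by lra. replace (c (S n)) with (w * s n) by lra.
      rewrite Rabs_Ropp, !Rabs_mult. simpl. rewrite Rmult_assoc, IHn by lia. ring. }
  apply H0. lia.
Qed.

Section Decay.
Variable L : R.
Hypothesis HL : 0 < L.

Lemma abs_Ic_le g k1 k2 k3 : cont3 g ->
  Rabs (Ic L g k1 k2 k3) <= intOmega L (fun x y z => Rabs (g x y z)).
Proof.
  intros Hg. unfold Ic. eapply Rle_trans; [apply intOmega_abs; auto; apply cont3_gcos; auto|].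
  apply intOmega_le; auto.
  - apply cont3_abs. apply cont3_gcos; auto.
  - apply cont3_abs; auto.
  - intros. rewrite Rabs_mult. pose proof (COS_bound (V L k1 k2 k3 x y z)).
    pose proof (Rabs_pos (g x y z)).
    assert (Rabs (cos (V L k1 k2 k3 x y z)) <= 1) by (apply Rabs_le; lra). nra.
Qed.

Lemma abs_Is_le g k1 k2 k3 : cont3 g ->
  Rabs (Is L g k1 k2 k3) <= intOmega L (fun x y z => Rabs (g x y z)).
Proof.
  intros Hg. unfold Is. eapply Rle_trans; [apply intOmega_abs; auto; apply cont3_gsin; auto|].
  apply intOmega_le; auto.
  - apply cont3_abs. apply cont3_gsin; auto.
  - apply cont3_abs; auto.
  - intros. rewrite Rabs_mult. pose proof (SIN_bound (V L k1 k2 k3 x y z)).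
    pose proof (Rabs_pos (g x y z)).
    assert (Rabs (sin (V L k1 k2 k3 x y z)) <= 1) by (apply Rabs_le; lra). nra.
Qed.

Lemma decay_x Phi k1 k2 k3 : isZ k1 -> Ck 6 Phi -> periodic3 L Phi ->
  Rabs (2 * PI * k1 / L) ^ 6 * (Rabs (Ic L Phi k1 k2 k3) + Rabs (Is L Phi k1 k2 k3)) <=
  2 * intOmega L (fun x y z => Rabs (Nat.iter 6 pdx Phi x y z)).
Proof.
  intros Hk HC Hper.
  assert (HCn : forall n, (n <= 6)%nat -> Ck (6 - n) (Nat.iter n pdx Phi)).
  { intros n Hn. apply Ck_iter_x. replace (6 - n + n)%nat with 6%nat by lia. auto. }
  rewrite (decay_abs (fun n => Ic L (Nat.iter n pdx Phi) k1 k2 k3) (fun n => Is L (Nat.iter n pdx Phi) k1 k2 k3)).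
  - assert (Hc6 : cont3 (Nat.iter 6 pdx Phi)) by (apply (Ck_cont 0), (HCn 6%nat); lia).
    pose proof (abs_Ic_le _ k1 k2 k3 Hc6). pose proof (abs_Is_le _ k1 k2 k3 Hc6). lra.
  - intros n Hn.
    assert (Hg : Ck (S (5 - n)) (Nat.iter n pdx Phi)) by (replace (S (5 - n)) with (6 - n)%nat by lia; apply HCn; lia).
    destruct (Ck_S _ _ Hg) as [Hex [Hx [Hy Hz]]].
    apply (rel_x L HL (Nat.iter n pdx Phi) (Nat.iter (S n) pdx Phi) k1 k2 k3 Hk).
    + apply (Ck_cont (S (5 - n))); auto.
    + apply (Ck_cont (5 - n)). simpl. auto.
    + intros x y z. destruct (Hex x y z) as [H1 [H2 H3]].
      apply (Derive_correct (fun t => Nat.iter n pdx Phi t y z) x). auto.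
    + intros y z. pose proof (per_iter_x L n Phi Hper) as Hp.
      rewrite <- (proj1 (Hp 0 y z)). f_equal; ring.
Qed.

Lemma decay_y Phi k1 k2 k3 : isZ k2 -> Ck 6 Phi -> periodic3 L Phi ->
  Rabs (2 * PI * k2 / L) ^ 6 * (Rabs (Ic L Phi k1 k2 k3) + Rabs (Is L Phi k1 k2 k3)) <=
  2 * intOmega L (fun x y z => Rabs (Nat.iter 6 pdy Phi x y z)).
Proof.
  intros Hk HC Hper.
  assert (HCn : forall n, (n <= 6)%nat -> Ck (6 - n) (Nat.iter n pdy Phi)).
  { intros n Hn. apply Ck_iter_y. replace (6 - n + n)%nat with 6%nat by lia. auto. }
  rewrite (decay_abs (fun n => Ic L (Nat.iter n pdy Phi) k1 k2 k3) (fun n => Is L (Nat.iter n pdy Phi) k1 k2 k3)).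
  - assert (Hc6 : cont3 (Nat.iter 6 pdy Phi)) by (apply (Ck_cont 0), (HCn 6%nat); lia).
    pose proof (abs_Ic_le _ k1 k2 k3 Hc6). pose proof (abs_Is_le _ k1 k2 k3 Hc6). lra.
  - intros n Hn.
    assert (Hg : Ck (S (5 - n)) (Nat.iter n pdy Phi)) by (replace (S (5 - n)) with (6 - n)%nat by lia; apply HCn; lia).
    destruct (Ck_S _ _ Hg) as [Hex [Hx [Hy Hz]]].
    apply (rel_y L HL (Nat.iter n pdy Phi) (Nat.iter (S n) pdy Phi) k1 k2 k3 Hk).
    + apply (Ck_cont (S (5 - n))); auto.
    + apply (Ck_cont (5 - n)). simpl. auto.
    + intros x y z. destruct (Hex x y z) as [H1 [H2 H3]].
      apply (Derive_correct (fun t => Nat.iter n pdy Phi x t z) y). auto.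
    + intros x z. pose proof (per_iter_y L n Phi Hper) as Hp.
      rewrite <- (proj1 (proj2 (Hp x 0 z))). f_equal; ring.
Qed.

Lemma decay_z Phi k1 k2 k3 : isZ k3 -> Ck 6 Phi -> periodic3 L Phi ->
  Rabs (2 * PI * k3 / L) ^ 6 * (Rabs (Ic L Phi k1 k2 k3) + Rabs (Is L Phi k1 k2 k3)) <=
  2 * intOmega L (fun x y z => Rabs (Nat.iter 6 pdz Phi x y z)).
Proof.
  intros Hk HC Hper.
  assert (HCn : forall n, (n <= 6)%nat -> Ck (6 - n) (Nat.iter n pdz Phi)).
  { intros n Hn. apply Ck_iter_z. replace (6 - n + n)%nat with 6%nat by lia. auto. }
  rewrite (decay_abs (fun n => Ic L (Nat.iter n pdz Phi) k1 k2 k3) (fun n => Is L (Nat.iter n pdz Phi) k1 k2 k3)).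
  - assert (Hc6 : cont3 (Nat.iter 6 pdz Phi)) by (apply (Ck_cont 0), (HCn 6%nat); lia).
    pose proof (abs_Ic_le _ k1 k2 k3 Hc6). pose proof (abs_Is_le _ k1 k2 k3 Hc6). lra.
  - intros n Hn.
    assert (Hg : Ck (S (5 - n)) (Nat.iter n pdz Phi)) by (replace (S (5 - n)) with (6 - n)%nat by lia; apply HCn; lia).
    destruct (Ck_S _ _ Hg) as [Hex [Hx [Hy Hz]]].
    apply (rel_z L HL (Nat.iter n pdz Phi) (Nat.iter (S n) pdz Phi) k1 k2 k3 Hk).
    + apply (Ck_cont (S (5 - n))); auto.
    + apply (Ck_cont (5 - n)). simpl. auto.
    + intros x y z. destruct (Hex x y z) as [H1 [H2 H3]].
      apply (Derive_correct (fun t => Nat.iter n pdz Phi x y t) z). auto.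
    + intros x y. pose proof (per_iter_z L n Phi Hper) as Hp.
      rewrite <- (proj2 (proj2 (Hp x y 0))). f_equal; ring.
Qed.

End Decay.

Definition W t := / ((1 + Rabs t) * sqrt (1 + Rabs t)).

Lemma W_pos t : 0 < W t.
Proof.
  unfold W. pose proof (Rabs_pos t). apply Rinv_0_lt_compat.
  apply Rmult_lt_0_compat; [lra|apply sqrt_lt_R0; lra].
Qed.

Lemma W_mono t u : Rabs t <= Rabs u -> W u <= W t.
Proof.
  intros H. unfold W. pose proof (Rabs_pos t).
  apply Rinv_le_contravar.
  - apply Rmult_lt_0_compat; [lra|apply sqrt_lt_R0; lra].
  - apply Rmult_le_compat; try lra.
    + left; apply sqrt_lt_R0; lra.
    + apply sqrt_le_1_alt; lra.
Qed.

Lemma tail_step s t : 0 < s -> s < t -> t * t = s * s + 1 ->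
  / (t * t * t) <= 2 / s - 2 / t.
Proof.
  intros Hs Hst Ht.
  assert (Ht0 : 0 < t) by lra.
  assert (HD : 0 < s * t * t * t) by (repeat apply Rmult_lt_0_compat; lra).
  replace (2 / s - 2 / t) with ((2 * t * t * t - 2 * s * t * t) * / (s * t * t * t)) by (field; lra).
  replace (/ (t * t * t)) with (s * / (s * t * t * t)) by (field; lra).
  apply Rmult_le_compat_r; [left; apply Rinv_0_lt_compat; auto|].
  assert (0 <= (t - s) * (t - s) * (2 * t + s)) by (apply Rmult_le_pos; nra).
  assert (s = s * (t * t) - s * (s * s)) by nra.
  nra.
Qed.

Lemma tail_sum M : (1 <= M)%nat ->
  rsum M (fun i => / ((1 + INR i) * sqrt (1 + INR i))) <= 3 - 2 / sqrt (INR M).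
Proof.
  induction M; intros HM; [lia|].
  destruct M.
  - simpl. rewrite Rplus_0_r, sqrt_1. replace (/ (1 * 1)) with 1 by field. replace (2 / 1) with 2 by field. lra.
  - specialize (IHM ltac:(lia)). rewrite rsum_S.
    pose proof (pos_INR (S M)). pose proof (pos_INR M).
    set (s := sqrt (INR (S M))) in *. set (t := sqrt (INR (S (S M)))) in *.
    assert (Hs : 0 < s) by (apply sqrt_lt_R0; rewrite S_INR; lra).
    assert (Hs2 : s * s = INR (S M)) by (apply sqrt_sqrt; lra).
    assert (Ht2 : t * t = INR (S (S M))) by (apply sqrt_sqrt; pose proof (pos_INR (S (S M))); lra).
    assert (Ht : 0 <= t) by apply sqrt_pos.
    rewrite (S_INR (S M)) in Ht2.
    assert (Hst : s < t) by nra.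
    replace (1 + INR (S M)) with (t * t) by (rewrite Ht2; ring).
    replace (sqrt (t * t)) with t by (rewrite sqrt_square; auto).
    pose proof (tail_step s t Hs Hst ltac:(lra)). lra.
Qed.

Lemma tail_sum3 M : rsum M (fun i => / ((1 + INR i) * sqrt (1 + INR i))) <= 3.
Proof.
  destruct M; [simpl; lra|].
  pose proof (tail_sum (S M) ltac:(lia)).
  assert (0 < 2 / sqrt (INR (S M))).
  { apply Rdiv_lt_0_compat; [lra|]. apply sqrt_lt_R0. apply lt_0_INR; lia. }
  lra.
Qed.

Lemma W_INR i : W (INR i) = / ((1 + INR i) * sqrt (1 + INR i)).
Proof. unfold W. rewrite Rabs_right; auto. apply Rle_ge, pos_INR. Qed.

Lemma Wsum K : rsum (2 * K + 1) (fun a => W (INR a - INR K)) <= 6.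
Proof.
  replace (2 * K + 1)%nat with (K + S K)%nat by lia.
  rewrite rsum_split.
  assert (H1 : rsum K (fun a => W (INR a - INR K)) <= 3).
  { rewrite <- rsum_rev.
    eapply Rle_trans; [|apply (tail_sum3 K)].
    apply rsum_le. intros i Hi. rewrite <- W_INR. apply W_mono.
    rewrite minus_INR by lia. rewrite minus_INR by lia.
    replace (INR K - INR 1 - INR i - INR K) with (- (1 + INR i)) by (simpl; ring).
    rewrite Rabs_Ropp. pose proof (pos_INR i). rewrite !Rabs_right; lra. }
  assert (H2 : rsum (S K) (fun i => W (INR (K + i) - INR K)) <= 3).
  { eapply Rle_trans; [|apply (tail_sum3 (S K))].
    apply rsum_le. intros i Hi. rewrite <- W_INR. rewrite plus_INR.
    replace (INR K + INR i - INR K) with (INR i) by ring. lra. }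
  lra.
Qed.

Lemma r5 r t1 t2 t3 : 1 <= r -> Rabs t1 <= r -> Rabs t2 <= r -> Rabs t3 <= r ->
  / r ^ 5 <= 24 * (W t1 * W t2 * W t3).
Proof.
  intros Hr H1 H2 H3.
  assert (Hrr : Rabs r = r) by (apply Rabs_right; lra).
  assert (A1 : W r <= W t1) by (apply W_mono; lra).
  assert (A2 : W r <= W t2) by (apply W_mono; lra).
  assert (A3 : W r <= W t3) by (apply W_mono; lra).
  pose proof (W_pos r).
  assert (W r * W r * W r <= W t1 * W t2 * W t3).
  { apply Rmult_le_compat; try (left; apply Rmult_lt_0_compat); auto; try lra.
    apply Rmult_le_compat; lra. }
  enough (/ r ^ 5 <= 24 * (W r * W r * W r)) by lra.
  unfold W. rewrite Hrr.
  set (u := sqrt (1 + r)).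
  assert (Hu : 0 < u) by (apply sqrt_lt_R0; lra).
  assert (Hu2 : u * u = 1 + r) by (apply sqrt_sqrt; lra).
  assert (Hu3 : u <= 3 / 2 * r) by nra.
  assert (Hp : 0 < (1 + r) * u) by (apply Rmult_lt_0_compat; lra).
  replace (24 * (/ ((1 + r) * u) * / ((1 + r) * u) * / ((1 + r) * u)))
    with (/ (((1 + r) * u) * ((1 + r) * u) * ((1 + r) * u) / 24)) by (field; lra).
  apply Rinv_le_contravar.
  - apply Rdiv_lt_0_compat; [|lra]. repeat apply Rmult_lt_0_compat; lra.
  - assert (E : ((1 + r) * u) * ((1 + r) * u) * ((1 + r) * u) = (1 + r) ^ 4 * u) by (transitivity ((1 + r) ^ 3 * (u * u) * u); [ring|rewrite Hu2; ring]).
    rewrite E.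
    assert ((1 + r) ^ 4 <= (2 * r) ^ 4) by (apply pow_incr; lra).
    assert ((1 + r) ^ 4 * u <= (2 * r) ^ 4 * (3 / 2 * r)).
    { apply Rmult_le_compat; try lra. apply pow_le; lra. }
    assert (0 < r ^ 5) by (apply pow_lt; lra).
    replace ((2 * r) ^ 4 * (3 / 2 * r)) with (24 * r ^ 5) in H5 by field.
    unfold Rdiv. lra.
Qed.

Lemma isZ_ge1 k : (exists a b : nat, k = INR a - INR b) -> k <> 0 -> 1 <= Rabs k.
Proof.
  intros [a [b ->]] Hk.
  destruct (Nat.lt_trichotomy a b) as [H|[H|H]].
  - assert (INR a + 1 <= INR b) by (rewrite <- S_INR; apply le_INR; lia).
    rewrite Rabs_left by lra. lra.
  - subst. lra.
  - assert (INR b + 1 <= INR a) by (rewrite <- S_INR; apply le_INR; lia).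
    rewrite Rabs_right by lra. lra.
Qed.

Section TB.
Variable L : R.
Hypothesis HL : 0 < L.
Variable Phi : fun3.
Hypothesis HC : Ck 6 Phi.
Hypothesis Hper : periodic3 L Phi.

Definition Bc := intOmega L (fun x y z => Rabs (Nat.iter 6 pdx Phi x y z)) +
                 intOmega L (fun x y z => Rabs (Nat.iter 6 pdy Phi x y z)) +
                 intOmega L (fun x y z => Rabs (Nat.iter 6 pdz Phi x y z)).

Lemma intOmega_abs_nonneg g : cont3 g -> 0 <= intOmega L (fun x y z => Rabs (g x y z)).
Proof.
  intros Hg. replace 0 with (intOmega L (fun _ _ _ => 0)) by (rewrite intOmega_const; auto; ring).
  apply intOmega_le; auto. apply cont3_const. apply cont3_abs; auto. intros; apply Rabs_pos.
Qed.

Lemma cont_iter6_x : cont3 (Nat.iter 6 pdx Phi).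
Proof. apply (Ck_cont 0). apply Ck_iter_x. simpl. auto. Qed.
Lemma cont_iter6_y : cont3 (Nat.iter 6 pdy Phi).
Proof. apply (Ck_cont 0). apply Ck_iter_y. simpl. auto. Qed.
Lemma cont_iter6_z : cont3 (Nat.iter 6 pdz Phi).
Proof. apply (Ck_cont 0). apply Ck_iter_z. simpl. auto. Qed.

Lemma Bc_parts : 0 <= intOmega L (fun x y z => Rabs (Nat.iter 6 pdx Phi x y z)) /\
                 0 <= intOmega L (fun x y z => Rabs (Nat.iter 6 pdy Phi x y z)) /\
                 0 <= intOmega L (fun x y z => Rabs (Nat.iter 6 pdz Phi x y z)).
Proof.
  repeat split; apply intOmega_abs_nonneg.
  apply cont_iter6_x. apply cont_iter6_y. apply cont_iter6_z.
Qed.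

Definition CstK := 48 * Bc * (L / (2 * PI)) ^ 5.

Lemma CstK_nonneg : 0 <= CstK.
Proof.
  unfold CstK, Bc. pose proof Bc_parts. pose proof PI_RGT_0.
  apply Rmult_le_pos; [lra|]. apply pow_le. apply Rdiv_le_0_compat; lra.
Qed.

Lemma absw k : Rabs (2 * PI * k / L) = 2 * PI / L * Rabs k.
Proof.
  pose proof PI_RGT_0. unfold Rdiv. rewrite !Rabs_mult, Rabs_right by lra.
  rewrite (Rabs_right PI) by lra. rewrite (Rabs_right (/ L)) by (left; apply Rinv_0_lt_compat; lra). ring.
Qed.

Lemma term_bound k1 k2 k3 kd : isZ k1 -> isZ k2 -> isZ k3 -> (kd = k1 \/ kd = k2 \/ kd = k3) ->
  Rabs (2 * PI * kd / L) * (Rabs (Ic L Phi k1 k2 k3) + Rabs (Is L Phi k1 k2 k3)) <=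
  CstK * (W k1 * W k2 * W k3).
Proof.
  intros Z1 Z2 Z3 Hkd.
  pose proof PI_RGT_0 as HPI.
  set (S := Rabs (Ic L Phi k1 k2 k3) + Rabs (Is L Phi k1 k2 k3)).
  assert (HS : 0 <= S) by (unfold S; pose proof (Rabs_pos (Ic L Phi k1 k2 k3)); pose proof (Rabs_pos (Is L Phi k1 k2 k3)); lra).
  set (q := 2 * PI / L).
  assert (Hq : 0 < q) by (unfold q; apply Rdiv_lt_0_compat; lra).
  pose proof Bc_parts as [B1 [B2 B3]].
  assert (HW : 0 < W k1 * W k2 * W k3) by (pose proof (W_pos k1); pose proof (W_pos k2); pose proof (W_pos k3);
     repeat apply Rmult_lt_0_compat; auto).
  pose proof CstK_nonneg.
  assert (D1 : (q * Rabs k1) ^ 6 * S <= 2 * Bc).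
  { pose proof (decay_x L HL Phi k1 k2 k3 Z1 HC Hper). rewrite absw in H0. fold q S in H0. unfold Bc. lra. }
  assert (D2 : (q * Rabs k2) ^ 6 * S <= 2 * Bc).
  { pose proof (decay_y L HL Phi k1 k2 k3 Z2 HC Hper). rewrite absw in H0. fold q S in H0. unfold Bc. lra. }
  assert (D3 : (q * Rabs k3) ^ 6 * S <= 2 * Bc).
  { pose proof (decay_z L HL Phi k1 k2 k3 Z3 HC Hper). rewrite absw in H0. fold q S in H0. unfold Bc. lra. }
  rewrite absw. fold q.
  set (r := Rmax (Rabs k1) (Rmax (Rabs k2) (Rabs k3))).
  assert (R1 : Rabs k1 <= r) by (unfold r; apply Rmax_l).
  assert (R2 : Rabs k2 <= r) by (unfold r; eapply Rle_trans; [apply (Rmax_l _ (Rabs k3))|apply Rmax_r]).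
  assert (R3 : Rabs k3 <= r) by (unfold r; eapply Rle_trans; [apply (Rmax_r (Rabs k2))|apply Rmax_r]).
  assert (Hcase : (k1 = 0 /\ k2 = 0 /\ k3 = 0) \/ 1 <= r).
  { destruct (Req_dec k1 0); [destruct (Req_dec k2 0); [destruct (Req_dec k3 0)|]|].
    - left; auto.
    - right. pose proof (isZ_ge1 k3 Z3 H2). lra.
    - right. pose proof (isZ_ge1 k2 Z2 H1). lra.
    - right. pose proof (isZ_ge1 k1 Z1 H0). lra. }
  destruct Hcase as [[E1 [E2 E3]]|Hr1].
  - assert (kd = 0) by (destruct Hkd as [->|[->| ->]]; auto). subst kd.
    rewrite Rabs_R0, Rmult_0_r, Rmult_0_l. apply Rmult_le_pos; lra.
  - assert (Hr : (q * r) ^ 6 * S <= 2 * Bc).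
    { assert (r = Rabs k1 \/ r = Rabs k2 \/ r = Rabs k3) as [Hr|[Hr|Hr]]
        by (unfold r, Rmax; repeat destruct Rle_dec; auto); rewrite Hr; auto. }
    assert (Hkr : Rabs kd <= r) by (destruct Hkd as [->|[->| ->]]; auto).
    assert (Hqr : 0 < q * r) by (apply Rmult_lt_0_compat; lra).
    assert (Hqr5 : 0 < (q * r) ^ 5) by (apply pow_lt; auto).
    assert (A1 : q * Rabs kd * S <= q * r * S).
    { apply Rmult_le_compat_r; auto. apply Rmult_le_compat_l; lra. }
    assert (A2 : q * r * S <= 2 * Bc / (q * r) ^ 5).
    { apply (Rmult_le_reg_l ((q * r) ^ 5)); auto.
      replace ((q * r) ^ 5 * (2 * Bc / (q * r) ^ 5)) with (2 * Bc) by (field; lra).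
      replace ((q * r) ^ 5 * (q * r * S)) with ((q * r) ^ 6 * S) by ring. auto. }
    assert (A3 : / r ^ 5 <= 24 * (W k1 * W k2 * W k3)) by (apply r5; auto).
    assert (E : 2 * Bc / (q * r) ^ 5 = 2 * Bc * (L / (2 * PI)) ^ 5 * / r ^ 5).
    { unfold q. field. split; [lra|]. split; lra. }
    assert (0 <= 2 * Bc * (L / (2 * PI)) ^ 5).
    { apply Rmult_le_pos; [unfold Bc; lra|]. apply pow_le. apply Rdiv_le_0_compat; lra. }
    assert (2 * Bc * (L / (2 * PI)) ^ 5 * / r ^ 5 <= 2 * Bc * (L / (2 * PI)) ^ 5 * (24 * (W k1 * W k2 * W k3)))
      by (apply Rmult_le_compat_l; auto).
    unfold CstK. lra.
Qed.

End TB.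

Lemma int_kernel L Phi k1 k2 k3 x1 x2 x3 : 0 < L -> cont3 Phi ->
  intOmega L (fun y1 y2 y3 => Phi y1 y2 y3 *
      cos (2 * PI * (k1 * (x1 - y1) + k2 * (x2 - y2) + k3 * (x3 - y3)) / L)) =
  cos (V L k1 k2 k3 x1 x2 x3) * Ic L Phi k1 k2 k3 + sin (V L k1 k2 k3 x1 x2 x3) * Is L Phi k1 k2 k3.
Proof.
  intros HL HP. unfold Ic, Is.
  rewrite <- (intOmega_scal L HL (cos (V L k1 k2 k3 x1 x2 x3))) by (apply cont3_gcos; auto).
  rewrite <- (intOmega_scal L HL (sin (V L k1 k2 k3 x1 x2 x3))) by (apply cont3_gsin; auto).
  rewrite <- intOmega_plus; auto.
  - apply intOmega_ext. intros y1 y2 y3.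
    replace (2 * PI * (k1 * (x1 - y1) + k2 * (x2 - y2) + k3 * (x3 - y3)) / L)
      with (V L k1 k2 k3 x1 x2 x3 - V L k1 k2 k3 y1 y2 y3) by (unfold V; field; lra).
    rewrite cos_minus. ring.
  - apply (cont3_mult (fun _ _ _ => cos (V L k1 k2 k3 x1 x2 x3)) (fun x y z => Phi x y z * cos (V L k1 k2 k3 x y z))).
    apply cont3_const. apply cont3_gcos; auto.
  - apply (cont3_mult (fun _ _ _ => sin (V L k1 k2 k3 x1 x2 x3)) (fun x y z => Phi x y z * sin (V L k1 k2 k3 x y z))).
    apply cont3_const. apply cont3_gsin; auto.
Qed.

Definition kv (K a : nat) := INR a - INR K.

Definition PNF L K Phi x1 x2 x3 a b c :=
  cos (V L (kv K a) (kv K b) (kv K c) x1 x2 x3) * Ic L Phi (kv K a) (kv K b) (kv K c) +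
  sin (V L (kv K a) (kv K b) (kv K c) x1 x2 x3) * Is L Phi (kv K a) (kv K b) (kv K c).

Lemma PN_expand L K Phi x1 x2 x3 : 0 < L -> cont3 Phi ->
  PN L K Phi x1 x2 x3 = / L ^ 3 * sum3 (2 * K + 1) (PNF L K Phi x1 x2 x3).
Proof.
  intros HL HP. unfold PN, sum3. f_equal.
  apply rsum_ext; intros a _; apply rsum_ext; intros b _; apply rsum_ext; intros c _.
  cbv zeta. unfold PNF, kv. apply int_kernel; auto.
Qed.

Lemma rsum_tele n (T : nat -> R) : rsum n (fun l => T (S l) - T l) = T n - T O.
Proof. induction n; simpl; [ring|]. rewrite IHn. ring. Qed.

Definition th (K a i : nat) := 2 * PI * kv K a * (INR i + / 2) / INR (2 * K + 1).

Lemma kv_isZ K a : isZ (kv K a).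
Proof. exists a, K. reflexivity. Qed.

Lemma sin_delta_nz K a : (a < 2 * K + 1)%nat -> a <> K -> sin (PI * kv K a / INR (2 * K + 1)) <> 0.
Proof.
  intros Ha HaK. pose proof PI_RGT_0 as HPI.
  assert (HN : INR (2 * K + 1) = 2 * INR K + 1) by (rewrite plus_INR, mult_INR; simpl; ring).
  assert (HK := pos_INR K).
  unfold kv. destruct (Nat.lt_trichotomy a K) as [H|[H|H]]; [|lia|].
  - assert (INR a + 1 <= INR K) by (rewrite <- S_INR; apply le_INR; lia).
    pose proof (pos_INR a).
    set (d := PI * (INR a - INR K) / INR (2 * K + 1)).
    assert (Hd1 : d < 0).
    { unfold d. rewrite HN. unfold Rdiv. apply Rmult_neg_pos.
      - apply Rmult_pos_neg; lra.
      - apply Rinv_0_lt_compat; lra. }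
    assert (Hd2 : - PI < d).
    { unfold d. rewrite HN. apply (Rmult_lt_reg_r (2 * INR K + 1)); [lra|].
      field_simplify; try lra. nra. }
    assert (0 < sin (- d)) by (apply sin_gt_0; lra).
    rewrite sin_neg in H2. lra.
  - assert (INR K + 1 <= INR a) by (rewrite <- S_INR; apply le_INR; lia).
    assert (INR a <= 2 * INR K) by (assert (a <= 2 * K)%nat by lia; apply le_INR in H1; rewrite mult_INR in H1; simpl in H1; lra).
    set (d := PI * (INR a - INR K) / INR (2 * K + 1)).
    assert (Hd1 : 0 < d).
    { unfold d. rewrite HN. apply Rdiv_lt_0_compat; [apply Rmult_lt_0_compat|]; lra. }
    assert (Hd2 : d < PI).
    { unfold d. rewrite HN. apply (Rmult_lt_reg_r (2 * INR K + 1)); [lra|].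
      field_simplify; try lra. nra. }
    assert (0 < sin d) by (apply sin_gt_0; lra). lra.
Qed.

Lemma trig1 K a c : (a < 2 * K + 1)%nat ->
  rsum (2 * K + 1) (fun l => cos (c + th K a l)) = (if Nat.eqb a K then INR (2 * K + 1) * cos c else 0) /\
  rsum (2 * K + 1) (fun l => sin (c + th K a l)) = (if Nat.eqb a K then INR (2 * K + 1) * sin c else 0).
Proof.
  intros Ha. set (N := (2 * K + 1)%nat).
  assert (HN : 0 < INR N) by (apply lt_0_INR; unfold N; lia).
  destruct (Nat.eqb_spec a K) as [E|E].
  - subst a. unfold th, kv. rewrite Rminus_diag.
    rewrite (rsum_ext _ _ (fun _ => cos c)), (rsum_ext _ (fun l => sin _) (fun _ => sin c)), !rsum_const.
    + split; reflexivity.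
    + intros. f_equal. unfold Rdiv. ring.
    + intros. f_equal. unfold Rdiv. ring.
  - set (d := PI * kv K a / INR N).
    assert (Hd : sin d <> 0) by (apply sin_delta_nz; auto).
    set (T := fun l => sin (c + 2 * PI * kv K a * INR l / INR N)).
    set (U := fun l => cos (c + 2 * PI * kv K a * INR l / INR N)).
    assert (E1 : forall l, 2 * sin d * cos (c + th K a l) = T (S l) - T l).
    { intros l. unfold T. rewrite S_INR.
      replace (c + 2 * PI * kv K a * (INR l + 1) / INR N) with ((c + th K a l) + d)
        by (unfold th, d; fold N; field; lra).
      replace (c + 2 * PI * kv K a * INR l / INR N) with ((c + th K a l) - d)
        by (unfold th, d; fold N; field; lra).
      rewrite sin_plus, sin_minus. ring. }
    assert (E2 : forall l, 2 * sin d * sin (c + th K a l) = U l - U (S l)).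
    { intros l. unfold U. rewrite S_INR.
      replace (c + 2 * PI * kv K a * (INR l + 1) / INR N) with ((c + th K a l) + d)
        by (unfold th, d; fold N; field; lra).
      replace (c + 2 * PI * kv K a * INR l / INR N) with ((c + th K a l) - d)
        by (unfold th, d; fold N; field; lra).
      rewrite cos_plus, cos_minus. ring. }
    assert (TN : T N = T O).
    { unfold T. replace (c + 2 * PI * kv K a * INR N / INR N) with (c + 2 * PI * kv K a) by (field; lra).
      rewrite sin_int by apply kv_isZ. f_equal. simpl. unfold Rdiv. ring. }
    assert (UN : U N = U O).
    { unfold U. replace (c + 2 * PI * kv K a * INR N / INR N) with (c + 2 * PI * kv K a) by (field; lra).
      rewrite cos_int by apply kv_isZ. f_equal. simpl. unfold Rdiv. ring. }
    split.
    + apply (Rmult_eq_reg_l (2 * sin d)); [|lra].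
      rewrite <- rsum_scal, Rmult_0_r.
      rewrite (rsum_ext _ _ (fun l => T (S l) - T l)) by (intros; apply E1).
      rewrite rsum_tele. lra.
    + apply (Rmult_eq_reg_l (2 * sin d)); [|lra].
      rewrite <- rsum_scal, Rmult_0_r.
      rewrite (rsum_ext _ _ (fun l => - (U (S l) - U l))) by (intros; rewrite E2; ring).
      rewrite (rsum_ext _ _ (fun l => (-1) * (U (S l) - U l))) by (intros; ring).
      rewrite rsum_scal, rsum_tele. lra.
Qed.

Lemma rsum_zero n : rsum n (fun _ => 0) = 0.
Proof. rewrite rsum_const. ring. Qed.

Lemma grid_gen (f : R -> R) K a b c :
  (forall a c, (a < 2 * K + 1)%nat ->
     rsum (2 * K + 1) (fun l => f (c + th K a l)) = if Nat.eqb a K then INR (2 * K + 1) * f c else 0) ->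
  (a < 2 * K + 1)%nat -> (b < 2 * K + 1)%nat -> (c < 2 * K + 1)%nat ->
  sum3 (2 * K + 1) (fun i j l => f (th K a i + th K b j + th K c l)) =
  if (Nat.eqb a K && Nat.eqb b K && Nat.eqb c K)%bool then INR (2 * K + 1) ^ 3 * f 0 else 0.
Proof.
  intros Hf Ha Hb Hc. set (N := (2 * K + 1)%nat). unfold sum3.
  rewrite (rsum_ext _ _ (fun i => rsum N (fun j => if Nat.eqb c K then INR N * f (th K a i + th K b j) else 0))).
  2: { intros i _. apply rsum_ext. intros j _. apply Hf; auto. }
  destruct (Nat.eqb c K); [|rewrite Bool.andb_false_r; rewrite (rsum_ext _ _ (fun _ => 0)) by (intros; apply rsum_zero); apply rsum_zero].
  rewrite Bool.andb_true_r.
  rewrite (rsum_ext _ _ (fun i => INR N * (if Nat.eqb b K then INR N * f (0 + th K a i) else 0))).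
  2: { intros i _. rewrite rsum_scal. f_equal. rewrite Hf by auto.
       destruct (Nat.eqb b K); auto. f_equal. f_equal. ring. }
  destruct (Nat.eqb b K); [|rewrite Bool.andb_false_r; rewrite (rsum_ext _ _ (fun _ => 0)) by (intros; ring); apply rsum_zero].
  rewrite Bool.andb_true_r.
  rewrite (rsum_ext _ _ (fun i => (INR N * INR N) * f (0 + th K a i))) by (intros; ring).
  rewrite rsum_scal, Hf by auto.
  destruct (Nat.eqb a K); unfold N; ring.
Qed.

Lemma grid_cos K a b c : (a < 2 * K + 1)%nat -> (b < 2 * K + 1)%nat -> (c < 2 * K + 1)%nat ->
  sum3 (2 * K + 1) (fun i j l => cos (th K a i + th K b j + th K c l)) =
  if (Nat.eqb a K && Nat.eqb b K && Nat.eqb c K)%bool then INR (2 * K + 1) ^ 3 else 0.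
Proof.
  intros. rewrite grid_gen; auto.
  - rewrite cos_0, Rmult_1_r. reflexivity.
  - intros; apply trig1; auto.
Qed.

Lemma grid_sin K a b c : (a < 2 * K + 1)%nat -> (b < 2 * K + 1)%nat -> (c < 2 * K + 1)%nat ->
  sum3 (2 * K + 1) (fun i j l => sin (th K a i + th K b j + th K c l)) = 0.
Proof.
  intros. rewrite grid_gen; auto.
  - rewrite sin_0, Rmult_0_r. destruct (andb (andb _ _) _); reflexivity.
  - intros; apply trig1; auto.
Qed.

Lemma rsum_swap3 n m (F : nat -> nat -> nat -> nat -> R) :
  rsum n (fun i => rsum m (fun a => rsum m (fun b => rsum m (fun c => F i a b c)))) =
  rsum m (fun a => rsum m (fun b => rsum m (fun c => rsum n (fun i => F i a b c)))).
Proof.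
  rewrite rsum_swap. apply rsum_ext; intros a _.
  rewrite rsum_swap. apply rsum_ext; intros b _.
  apply rsum_swap.
Qed.

Lemma sum3_swap n m (F : nat -> nat -> nat -> nat -> nat -> nat -> R) :
  sum3 n (fun i j l => sum3 m (fun a b c => F i j l a b c)) =
  sum3 m (fun a b c => sum3 n (fun i j l => F i j l a b c)).
Proof.
  unfold sum3.
  rewrite (rsum_ext n _ (fun i => rsum n (fun j => rsum m (fun a => rsum m (fun b => rsum m (fun c =>
              rsum n (fun l => F i j l a b c))))))).
  2: { intros i _. apply rsum_ext. intros j _. apply rsum_swap3. }
  rewrite (rsum_ext n _ (fun i => rsum m (fun a => rsum m (fun b => rsum m (fun c => rsum n (fun j =>
              rsum n (fun l => F i j l a b c))))))).
  2: { intros i _. apply (rsum_swap3 n m (fun j a b c => rsum n (fun l => F i j l a b c))). }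
  apply (rsum_swap3 n m (fun i a b c => rsum n (fun j => rsum n (fun l => F i j l a b c)))).
Qed.

Lemma rsum_ind0 n K (g : nat -> R) : (n <= K)%nat -> rsum n (fun c => if Nat.eqb c K then g c else 0) = 0.
Proof.
  induction n; intros H; simpl; auto.
  rewrite IHn by lia. destruct (Nat.eqb_spec n K); [lia|]. ring.
Qed.

Lemma rsum_ind1 n K (g : nat -> R) : (K < n)%nat -> rsum n (fun c => if Nat.eqb c K then g c else 0) = g K.
Proof.
  induction n; intros H; [lia|]. rewrite rsum_S.
  destruct (Nat.eqb_spec n K).
  - subst. rewrite rsum_ind0 by lia. ring.
  - rewrite IHn by lia. ring.
Qed.

Lemma sum3_ind N K (G : nat -> nat -> nat -> R) : (K < N)%nat ->
  sum3 N (fun a b c => if (Nat.eqb a K && Nat.eqb b K && Nat.eqb c K)%bool then G a b c else 0) = G K K K.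
Proof.
  intros HK. unfold sum3.
  rewrite (rsum_ext N _ (fun a => rsum N (fun b => if (Nat.eqb a K && Nat.eqb b K)%bool then G a b K else 0))).
  2: { intros a _. apply rsum_ext. intros b _. destruct (Nat.eqb a K && Nat.eqb b K)%bool.
       - apply (rsum_ind1 N K (fun c => G a b c)); auto.
       - apply rsum_zero. }
  rewrite (rsum_ext N _ (fun a => if Nat.eqb a K then G a K K else 0)).
  2: { intros a _. destruct (Nat.eqb a K).
       - apply (rsum_ind1 N K (fun b => G a b K)); auto.
       - apply rsum_zero. }
  apply (rsum_ind1 N K (fun a => G a K K)); auto.
Qed.

Lemma V_grid L K a b c i j l : 0 < L ->
  V L (kv K a) (kv K b) (kv K c) ((INR i + / 2) * (L / INR (2 * K + 1)))
     ((INR j + / 2) * (L / INR (2 * K + 1))) ((INR l + / 2) * (L / INR (2 * K + 1))) =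
  th K a i + th K b j + th K c l.
Proof.
  intros HL. assert (0 < INR (2 * K + 1)) by (apply lt_0_INR; lia).
  unfold V, th. field. lra.
Qed.

Lemma PB : forall L Phi K, 0 < L -> C6per L Phi ->
  intOmega L Phi = ip (2 * K + 1) (L / INR (2 * K + 1))
     (Ph (L / INR (2 * K + 1)) (PN L K Phi)) cst1.
Proof.
  intros L Phi K HL [Hper HC].
  assert (HP : cont3 Phi) by (apply (Ck_cont 6); auto).
  set (N := (2 * K + 1)%nat). set (h := L / INR N).
  assert (HN : (0 < N)%nat) by (unfold N; lia).
  unfold ip.
  rewrite (sum3_ext N _ (fun i j l => / L ^ 3 * sum3 N (fun a b c =>
      Ic L Phi (kv K a) (kv K b) (kv K c) * cos (th K a i + th K b j + th K c l) +
      Is L Phi (kv K a) (kv K b) (kv K c) * sin (th K a i + th K b j + th K c l)))).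
  2: { intros i j l _ _ _. unfold cst1, Ph. rewrite Rmult_1_r. rewrite PN_expand by auto.
       f_equal. apply sum3_ext. intros a b c _ _ _. unfold PNF. unfold h, N. rewrite V_grid by auto. ring. }
  rewrite sum3_scal, sum3_swap.
  rewrite (sum3_ext N _ (fun a b c => if (Nat.eqb a K && Nat.eqb b K && Nat.eqb c K)%bool then
              Ic L Phi (kv K a) (kv K b) (kv K c) * INR N ^ 3 else 0)).
  2: { intros a b c Ha Hb Hc. rewrite sum3_plus, !sum3_scal.
       unfold N in *. rewrite grid_cos, grid_sin by auto.
       destruct (Nat.eqb a K && Nat.eqb b K && Nat.eqb c K)%bool; ring. }
  rewrite (sum3_ind N K (fun a b c => Ic L Phi (kv K a) (kv K b) (kv K c) * INR N ^ 3)) by (unfold N; lia).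
  unfold kv. rewrite Rminus_diag.
  assert (E : Ic L Phi 0 0 0 = intOmega L Phi).
  { unfold Ic. apply intOmega_ext. intros. replace (V L 0 0 0 x y z) with 0 by (unfold V; field; lra).
    rewrite cos_0. ring. }
  rewrite E.
  replace (h ^ 3 * (/ L ^ 3 * (intOmega L Phi * INR N ^ 3))) with ((h ^ 3 * INR N ^ 3) * / L ^ 3 * intOmega L Phi) by ring.
  unfold h. rewrite hN3 by auto. field. lra.
Qed.

Lemma Lip_cos u v : Rabs (cos u - cos v) <= Rabs (u - v).
Proof.
  destruct (MVT_abs cos (fun c => - sin c) v u) as [c [Hc _]].
  - intros; apply derivable_pt_lim_cos.
  - rewrite Hc. rewrite Rabs_Ropp. pose proof (SIN_bound c).
    assert (Rabs (sin c) <= 1) by (apply Rabs_le; lra).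
    pose proof (Rabs_pos (u - v)). nra.
Qed.

Lemma Lip_sin u v : Rabs (sin u - sin v) <= Rabs (u - v).
Proof.
  destruct (MVT_abs sin cos v u) as [c [Hc _]].
  - intros; apply derivable_pt_lim_sin.
  - rewrite Hc. pose proof (COS_bound c).
    assert (Rabs (cos c) <= 1) by (apply Rabs_le; lra).
    pose proof (Rabs_pos (u - v)). nra.
Qed.

Lemma step_gen u u' w h k : 0 < h -> isZ k -> (u' = u + w * h \/ u' + 2 * PI * k = u + w * h) ->
  Rabs (cos u' - cos u) <= Rabs w * h /\ Rabs (sin u' - sin u) <= Rabs w * h.
Proof.
  intros Hh Hk [E|E].
  - subst u'. replace (Rabs w * h) with (Rabs (u + w * h - u)).
    + split; [apply Lip_cos|apply Lip_sin].
    + replace (u + w * h - u) with (w * h) by ring. rewrite Rabs_mult, (Rabs_right h); lra.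
  - rewrite <- (cos_int u' k), <- (sin_int u' k) by auto. rewrite E.
    replace (Rabs w * h) with (Rabs (u + w * h - u)).
    + split; [apply Lip_cos|apply Lip_sin].
    + replace (u + w * h - u) with (w * h) by ring. rewrite Rabs_mult, (Rabs_right h); lra.
Qed.

Lemma sp_INR N i : (i < N)%nat -> INR (sp N i) = INR i + 1 \/ INR (sp N i) = INR i + 1 - INR N.
Proof.
  intros H. destruct (Nat.lt_ge_cases (S i) N).
  - left. rewrite sp_small by auto. apply S_INR.
  - right. replace i with (N - 1)%nat by lia. rewrite sp_last by lia.
    rewrite minus_INR by lia. simpl. ring.
Qed.

Lemma sum3_abs N f : Rabs (sum3 N f) <= sum3 N (fun i j k => Rabs (f i j k)).
Proof.
  unfold sum3. eapply Rle_trans; [apply rsum_abs|]. apply rsum_le; intros i _.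
  eapply Rle_trans; [apply rsum_abs|]. apply rsum_le; intros j _. apply rsum_abs.
Qed.

Lemma sum3_prod N (f g h : nat -> R) :
  sum3 N (fun a b c => f a * g b * h c) = rsum N f * rsum N g * rsum N h.
Proof.
  unfold sum3. rewrite (rsum_ext N _ (fun a => (f a * rsum N g * rsum N h))).
  - rewrite (rsum_ext N _ (fun a => (rsum N g * rsum N h) * f a)) by (intros; ring).
    rewrite rsum_scal. ring.
  - intros a _. rewrite (rsum_ext N _ (fun b => (f a * g b) * rsum N h)).
    + rewrite (rsum_ext N _ (fun b => (f a * rsum N h) * g b)) by (intros; ring).
      rewrite rsum_scal. ring.
    + intros b _. rewrite <- rsum_scal. apply rsum_ext. intros; ring.
Qed.

Section Diff.
Variable L : R.
Hypothesis HL : 0 < L.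
Variable Phi : fun3.
Hypothesis HC : Ck 6 Phi.
Hypothesis Hper : periodic3 L Phi.

Lemma PN_diff K x1 x2 x3 y1 y2 y3 h (sel : R -> R -> R -> R) : 0 < h ->
  (forall k1 k2 k3, sel k1 k2 k3 = k1 \/ sel k1 k2 k3 = k2 \/ sel k1 k2 k3 = k3) ->
  (forall a b c, (a < 2 * K + 1)%nat -> (b < 2 * K + 1)%nat -> (c < 2 * K + 1)%nat ->
     let k1 := kv K a in let k2 := kv K b in let k3 := kv K c in
     Rabs (cos (V L k1 k2 k3 y1 y2 y3) - cos (V L k1 k2 k3 x1 x2 x3)) <= Rabs (2 * PI * sel k1 k2 k3 / L) * h /\
     Rabs (sin (V L k1 k2 k3 y1 y2 y3) - sin (V L k1 k2 k3 x1 x2 x3)) <= Rabs (2 * PI * sel k1 k2 k3 / L) * h) ->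
  Rabs ((PN L K Phi y1 y2 y3 - PN L K Phi x1 x2 x3) / h) <= / L ^ 3 * (CstK L Phi * 216).
Proof.
  intros Hh Hsel Htr.
  assert (HP : cont3 Phi) by (apply (Ck_cont 6); auto).
  set (N := (2 * K + 1)%nat).
  rewrite !PN_expand by auto. fold N.
  rewrite <- Rmult_minus_distr_l, <- sum3_minus.
  assert (HL3 : 0 < / L ^ 3) by (apply Rinv_0_lt_compat, pow_lt; auto).
  unfold Rdiv. rewrite Rmult_assoc, Rabs_mult, (Rabs_right (/ L ^ 3)) by lra.
  apply Rmult_le_compat_l; [lra|].
  rewrite Rabs_mult, (Rabs_right (/ h)) by (left; apply Rinv_0_lt_compat; auto).
  apply (Rmult_le_reg_r h); auto. rewrite Rmult_assoc, Rinv_l, Rmult_1_r by lra.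
  eapply Rle_trans; [apply sum3_abs|].
  eapply Rle_trans.
  { apply (sum3_le N _ (fun a b c => h * (CstK L Phi * (W (kv K a) * W (kv K b) * W (kv K c))))).
    intros a b c Ha Hb Hc. unfold PNF.
    destruct (Htr a b c Ha Hb Hc) as [T1 T2].
    set (k1 := kv K a) in *. set (k2 := kv K b) in *. set (k3 := kv K c) in *.
    pose proof (term_bound L HL Phi HC Hper k1 k2 k3 (sel k1 k2 k3) (kv_isZ K a) (kv_isZ K b) (kv_isZ K c) (Hsel k1 k2 k3)) as TB.
    replace (cos (V L k1 k2 k3 y1 y2 y3) * Ic L Phi k1 k2 k3 + sin (V L k1 k2 k3 y1 y2 y3) * Is L Phi k1 k2 k3 -
             (cos (V L k1 k2 k3 x1 x2 x3) * Ic L Phi k1 k2 k3 + sin (V L k1 k2 k3 x1 x2 x3) * Is L Phi k1 k2 k3))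
      with ((cos (V L k1 k2 k3 y1 y2 y3) - cos (V L k1 k2 k3 x1 x2 x3)) * Ic L Phi k1 k2 k3 +
            (sin (V L k1 k2 k3 y1 y2 y3) - sin (V L k1 k2 k3 x1 x2 x3)) * Is L Phi k1 k2 k3) by ring.
    eapply Rle_trans; [apply Rabs_triang|]. rewrite !Rabs_mult.
    pose proof (Rabs_pos (Ic L Phi k1 k2 k3)). pose proof (Rabs_pos (Is L Phi k1 k2 k3)).
    set (w := Rabs (2 * PI * sel k1 k2 k3 / L)) in *.
    assert (Rabs (cos (V L k1 k2 k3 y1 y2 y3) - cos (V L k1 k2 k3 x1 x2 x3)) * Rabs (Ic L Phi k1 k2 k3) <=
            w * h * Rabs (Ic L Phi k1 k2 k3)) by (apply Rmult_le_compat_r; auto).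
    assert (Rabs (sin (V L k1 k2 k3 y1 y2 y3) - sin (V L k1 k2 k3 x1 x2 x3)) * Rabs (Is L Phi k1 k2 k3) <=
            w * h * Rabs (Is L Phi k1 k2 k3)) by (apply Rmult_le_compat_r; auto).
    assert (h * (w * (Rabs (Ic L Phi k1 k2 k3) + Rabs (Is L Phi k1 k2 k3))) <=
            h * (CstK L Phi * (W k1 * W k2 * W k3))) by (apply Rmult_le_compat_l; lra).
    lra. }
  rewrite (sum3_ext N _ (fun a b c => (h * CstK L Phi) * (W (kv K a) * W (kv K b) * W (kv K c)))) by (intros; ring).
  rewrite sum3_scal.
  rewrite (sum3_prod N (fun a => W (kv K a)) (fun a => W (kv K a)) (fun a => W (kv K a))).
  assert (HW : rsum N (fun a => W (kv K a)) <= 6) by apply Wsum.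
  assert (HW0 : 0 <= rsum N (fun a => W (kv K a))).
  { rewrite <- (Rmult_0_r (INR N)), <- rsum_const. apply rsum_le. intros; left; apply W_pos. }
  pose proof (CstK_nonneg L HL Phi HC).
  set (s := rsum N (fun a => W (kv K a))) in *.
  assert (s * s * s <= 216).
  { assert (s * s <= 36) by nra. nra. }
  assert (h * CstK L Phi * (s * s * s) <= h * CstK L Phi * 216).
  { apply Rmult_le_compat_l; auto. apply Rmult_le_pos; lra. }
  lra.
Qed.

End Diff.

Lemma PC : forall L Phi, 0 < L -> C6per L Phi -> exists D, forall K i j k,
  (i < 2 * K + 1)%nat -> (j < 2 * K + 1)%nat -> (k < 2 * K + 1)%nat ->
  Rabs (Dx (2 * K + 1) (L / INR (2 * K + 1)) (Ph (L / INR (2 * K + 1)) (PN L K Phi)) i j k) <= D /\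
  Rabs (Dy (2 * K + 1) (L / INR (2 * K + 1)) (Ph (L / INR (2 * K + 1)) (PN L K Phi)) i j k) <= D /\
  Rabs (Dz (2 * K + 1) (L / INR (2 * K + 1)) (Ph (L / INR (2 * K + 1)) (PN L K Phi)) i j k) <= D.
Proof.
  intros L Phi HL [Hper HC].
  exists (/ L ^ 3 * (CstK L Phi * 216)).
  intros K i j l Hi Hj Hl.
  set (N := (2 * K + 1)%nat). set (h := L / INR N).
  assert (HN : 0 < INR N) by (apply lt_0_INR; unfold N; lia).
  assert (Hh : 0 < h) by (unfold h; apply Rdiv_lt_0_compat; auto).
  assert (HNh : INR N * h = L) by (unfold h; field; lra).
  unfold Dx, Dy, Dz, Ph. repeat split.
  - apply (PN_diff L HL Phi HC Hper K _ _ _ _ _ _ h (fun k1 _ _ => k1)); auto.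
    intros a b c Ha Hb Hc k1 k2 k3.
    apply (step_gen _ _ (2 * PI * k1 / L) h k1 Hh (kv_isZ K a)).
    destruct (sp_INR N i Hi) as [E|E]; rewrite E; [left|right]; unfold V, h; field; lra.
  - apply (PN_diff L HL Phi HC Hper K _ _ _ _ _ _ h (fun _ k2 _ => k2)); auto.
    intros a b c Ha Hb Hc k1 k2 k3.
    apply (step_gen _ _ (2 * PI * k2 / L) h k2 Hh (kv_isZ K b)).
    destruct (sp_INR N j Hj) as [E|E]; rewrite E; [left|right]; unfold V, h; field; lra.
  - apply (PN_diff L HL Phi HC Hper K _ _ _ _ _ _ h (fun _ _ k3 => k3)); auto.
    intros a b c Ha Hb Hc k1 k2 k3.
    apply (step_gen _ _ (2 * PI * k3 / L) h k3 Hh (kv_isZ K c)).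
    destruct (sp_INR N l Hl) as [E|E]; rewrite E; [left|right]; unfold V, h; field; lra.
Qed.

Lemma fip_nonneg N h M M0 (b mu : gf) : (0 < N)%nat -> 0 < h -> 0 < M0 ->
  (forall x, -1 <= x <= 1 -> M0 <= M x) ->
  (forall i j k, (i < N)%nat -> (j < N)%nat -> (k < N)%nat -> -1 < b i j k < 1) ->
  0 <= fip N h (fmul (mobface N M b) (grad N h mu)) (grad N h mu).
Proof.
  intros HN Hh HM0 HM Hb. unfold fip. apply Rmult_le_pos; [left; apply pow_lt; auto|].
  rewrite <- (Rmult_0_r (INR N ^ 3)), <- sum3_const. apply sum3_le; intros i j k Hi Hj Hk.
  unfold fmul, mobface, grad; cbn [fx fy fz].
  pose proof (Hb i j k Hi Hj Hk).
  pose proof (Hb (sp N i) j k (sp_lt N i HN) Hj Hk).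
  pose proof (Hb i (sp N j) k Hi (sp_lt N j HN) Hk).
  pose proof (Hb i j (sp N k) Hi Hj (sp_lt N k HN)).
  pose proof (HM ((b (sp N i) j k + b i j k) / 2) ltac:(split; lra)).
  pose proof (HM ((b i (sp N j) k + b i j k) / 2) ltac:(split; lra)).
  pose proof (HM ((b i j (sp N k) + b i j k) / 2) ltac:(split; lra)).
  assert (forall m x, 0 <= m -> 0 <= m * x * x) by (intros; rewrite Rmult_assoc; apply Rmult_le_pos; nra).
  pose proof (H6 (M ((b (sp N i) j k + b i j k) / 2)) (Dx N h mu i j k) ltac:(lra)).
  pose proof (H6 (M ((b i (sp N j) k + b i j k) / 2)) (Dy N h mu i j k) ltac:(lra)).
  pose proof (H6 (M ((b i j (sp N k) + b i j k) / 2)) (Dz N h mu i j k) ltac:(lra)).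
  lra.
Qed.

Theorem theorem4p1 :
  forall (L eps theta0 M0 : R) (M : R -> R) (Phi : fun3),
    0 < L -> 0 < eps -> 0 < theta0 -> 0 < M0 ->
    (forall x, -1 <= x <= 1 -> M0 <= M x) ->
    C6per L Phi ->
    (exists c, c < 1 /\ forall x y z, Rabs (Phi x y z) <= c) ->
    exists C6 : R, 0 < C6 /\
    forall (K : nat) (dt : R) (phi mu : nat -> gf),
      let N := (2 * K + 1)%nat in
      let h := L / INR N in
      0 < dt ->
      (forall i j k, (i < N)%nat -> (j < N)%nat -> (k < N)%nat ->
         phi 0%nat i j k = Ph h (PN L K Phi) i j k) ->
      (* the iterates stay in (-1,1) (so that the logarithms are defined) *)
      (forall m i j k, (i < N)%nat -> (j < N)%nat -> (k < N)%nat ->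
         -1 < phi m i j k < 1) ->
      (* the scheme *)
      (forall m i j k, (1 <= m)%nat -> (i < N)%nat -> (j < N)%nat -> (k < N)%nat ->
         (phi m i j k - phi (m - 1)%nat i j k) / dt =
           divh N h (fmul (mobface N M (phi (m - 1)%nat)) (grad N h (mu m))) i j k /\
         mu m i j k =
           ln (1 + phi m i j k) - ln (1 - phi m i j k)
           - theta0 * phi (m - 1)%nat i j k
           - eps ^ 2 * lap N h (phi m) i j k) ->
      intOmega L Phi = ip N h (phi 0%nat) cst1 /\
      (forall m, (1 <= m)%nat ->
         Eh N h eps theta0 (phi m)
         + dt * fip N h (fmul (mobface N M (phi (m - 1)%nat)) (grad N h (mu m)))
                        (grad N h (mu m))
         <= Eh N h eps theta0 (phi (m - 1)%nat)) /\
      (forall m, Eh N h eps theta0 (phi m) <= Eh N h eps theta0 (phi 0%nat)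
                 /\ Eh N h eps theta0 (phi 0%nat) <= C6) /\
      (forall m, sqrt (gradnorm2sq N h (phi m))
                 <= sqrt (2 * C6 + theta0 * L ^ 3) / eps).
Proof.
  intros L eps theta0 M0 M Phi HL Heps Hth HM0 HM HC6 _.
  destruct (PC L Phi HL HC6) as [D HD].
  assert (HL3 : 0 < L ^ 3) by (apply pow_lt; auto).
  assert (He2 : 0 <= eps ^ 2 / 2) by (pose proof (pow2_ge_0 eps); lra).
  assert (HD2 : 0 <= L ^ 3 * (3 * D ^ 2)) by (pose proof (pow2_ge_0 D); nra).
  exists (4 * L ^ 3 + eps ^ 2 / 2 * (L ^ 3 * (3 * D ^ 2)) + 1). split.
  { assert (0 <= eps ^ 2 / 2 * (L ^ 3 * (3 * D ^ 2))) by (apply Rmult_le_pos; auto). lra. }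
  intros K dt phi mu N h Hdt H0 Hbd Hs.
  assert (HN : (0 < N)%nat) by (unfold N; lia).
  assert (HINR : 0 < INR N) by (apply lt_0_INR; auto).
  assert (Hh : 0 < h) by (unfold h; apply Rdiv_lt_0_compat; auto).
  assert (HhN : h ^ 3 * INR N ^ 3 = L ^ 3) by (unfold h; apply hN3; auto).
  assert (Hstep : forall m, (1 <= m)%nat ->
         Eh N h eps theta0 (phi m)
         + dt * fip N h (fmul (mobface N M (phi (m - 1)%nat)) (grad N h (mu m)))
                        (grad N h (mu m))
         <= Eh N h eps theta0 (phi (m - 1)%nat)).
  { intros m Hm. apply energy_step; auto. }
  assert (Hmono : forall m, Eh N h eps theta0 (phi m) <= Eh N h eps theta0 (phi 0%nat)).
  { induction m. lra. specialize (Hstep (S m) ltac:(lia)).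
    replace (S m - 1)%nat with m in Hstep by lia.
    pose proof (fip_nonneg N h M M0 (phi m) (mu (S m)) HN Hh HM0 HM ltac:(intros; apply Hbd; auto)).
    assert (0 <= dt * fip N h (fmul (mobface N M (phi m)) (grad N h (mu (S m)))) (grad N h (mu (S m))))
      by (apply Rmult_le_pos; lra).
    lra. }
  assert (HE0 : Eh N h eps theta0 (phi 0%nat) <= 4 * L ^ 3 + eps ^ 2 / 2 * (L ^ 3 * (3 * D ^ 2))).
  { eapply Rle_trans; [apply Eh_upper; auto; intros; apply Hbd; auto|].
    rewrite HhN.
    assert (gradnorm2sq N h (phi 0%nat) <= h ^ 3 * INR N ^ 3 * (3 * D ^ 2)).
    { apply grad_bound; auto. intros i j k Hi Hj Hk.
      unfold Dx, Dy, Dz. rewrite !H0 by (auto; apply sp_lt; auto).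
      apply (HD K i j k Hi Hj Hk). }
    rewrite HhN in H. assert (eps ^ 2 / 2 * gradnorm2sq N h (phi 0%nat) <= eps ^ 2 / 2 * (L ^ 3 * (3 * D ^ 2)))
      by (apply Rmult_le_compat_l; auto). lra. }
  split; [|split; [exact Hstep|split]].
  - rewrite PB with (K := K) by auto. fold N. fold h. unfold ip. f_equal.
    apply sum3_ext; intros. rewrite H0; auto.
  - intros m. split; [apply Hmono|lra].
  - intros m. set (C6 := 4 * L ^ 3 + eps ^ 2 / 2 * (L ^ 3 * (3 * D ^ 2)) + 1).
    pose proof (Eh_lower N h eps theta0 (phi m) HN Hh Hth ltac:(intros; apply Hbd; auto)).
    rewrite HhN in H. pose proof (Hmono m).
    assert (HG : gradnorm2sq N h (phi m) * eps ^ 2 <= 2 * C6 + theta0 * L ^ 3) by (unfold C6 in *; lra).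
    assert (Heps2 : 0 < eps ^ 2) by (apply pow_lt; auto).
    replace (sqrt (2 * C6 + theta0 * L ^ 3) / eps) with (sqrt ((2 * C6 + theta0 * L ^ 3) / eps ^ 2)).
    + apply sqrt_le_1_alt. apply (Rmult_le_reg_r (eps ^ 2)); auto.
      unfold Rdiv. rewrite Rmult_assoc, Rinv_l by lra. lra.
    + rewrite sqrt_div_alt by auto. f_equal. rewrite <- (sqrt_pow2 eps) at 2 by lra. reflexivity.
Qed.
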